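(* Let $n=1$ and assume $\delta_1\in[1/2,1)$. Then there is $\lambda>0$ such that \[ \int_0^1\!dx_1\int_{[-1,1]^m}\!dx_2\,\Gamma_\delta(\varphi)(x_1,x_2)\ \ge\ \lambda\int_0^1\!dx_1\int_{[-1,1]^m}\!dx_2\,\big(\varphi(x_1,x_2)-\langle\varphi\rangle\big)^2 \] for all $\varphi\in C_c^1(\mathbb R^{1+m})$, where $\langle\varphi\rangle$ is the average of $\varphi$ over $[0,1]\times[-1,1]^m$.
   Context: Let $m\ge1$, $x=(x_1,x_2)\in\mathbb R\times\mathbb R^m$, $|\cdot|$ Euclidean norms. For $a\ge0$, $a^{(\alpha,\alpha')}=a^\alpha$ if $a\le1$ and $a^{\alpha'}$ if $a\ge1$. Fix $\delta_1,\delta_1'\in[0,1)$, $\delta_2,\delta_2'\ge0$; $\Gamma_\delta(\varphi)(x)=|x_1|^{(2\delta_1,2\delta_1')}|\partial_{x_1}\varphi(x)|^2+|x_1|^{(2\delta_2,2\delta_2')}|\nabla_{x_2}\varphi(x)|^2$. *)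

(* Defs.v *)
From Stdlib Require Import Reals Lra ClassicalEpsilon.
Open Scope R_scope.

(* Points of R^{1+m} are encoded as x : nat -> R, where x 0 = x_1 and
   x 1, ..., x m are the coordinates of x_2 in R^m.  Functions on R^{1+m}
   are functions (nat -> R) -> R that only depend on coordinates 0..m. *)

Definition upd (x : nat -> R) (i : nat) (t : R) : nat -> R :=
  fun j => if Nat.eqb j i then t else x j.

Definition depends_only_on (m : nat) (phi : (nat -> R) -> R) : Prop :=
  forall x y : nat -> R, (forall i, (i <= m)%nat -> x i = y i) -> phi x = phi y.

(* Continuity on R^{1+m} (sup-norm balls, equivalent to Euclidean ones). *)
Definition cont_at (m : nat) (g : (nat -> R) -> R) (x : nat -> R) : Prop :=
  forall eps, eps > 0 -> exists delta, delta > 0 /\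
    forall y, (forall i, (i <= m)%nat -> Rabs (y i - x i) < delta) ->
      Rabs (g y - g x) < eps.

(* i-th partial derivative (a total function; equals the true partial
   derivative whenever it exists, by uniqueness of limits). *)
Definition partial (phi : (nat -> R) -> R) (i : nat) (x : nat -> R) : R :=
  epsilon (inhabits 0)
    (fun l => derivable_pt_lim (fun t => phi (upd x i t)) (x i) l).

Definition C1 (m : nat) (phi : (nat -> R) -> R) : Prop :=
  depends_only_on m phi /\
  (forall i x, (i <= m)%nat ->
     derivable_pt_lim (fun t => phi (upd x i t)) (x i) (partial phi i x)) /\
  (forall i x, (i <= m)%nat -> cont_at m (partial phi i) x).

Definition compact_support (m : nat) (phi : (nat -> R) -> R) : Prop :=
  exists Rad, forall x, (exists i, (i <= m)%nat /\ Rabs (x i) > Rad) -> phi x = 0.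

Definition C1c (m : nat) (phi : (nat -> R) -> R) : Prop :=
  C1 m phi /\ compact_support m phi.

(* a^alpha for a >= 0, with 0^alpha = 0 for alpha > 0 and 0^0 = 1. *)
Definition rpow (a alpha : R) : R :=
  if Req_EM_T a 0 then (if Req_EM_T alpha 0 then 1 else 0) else Rpower a alpha.

Definition pow2 (a alpha alpha' : R) : R :=
  if Rle_dec a 1 then rpow a alpha else rpow a alpha'.

Fixpoint sum_1_to (m : nat) (g : nat -> R) : R :=
  match m with
  | O => 0
  | S k => sum_1_to k g + g (S k)
  end.

Definition Gamma (m : nat) (d1 d1' d2 d2' : R) (phi : (nat -> R) -> R)
  (x : nat -> R) : R :=
  pow2 (Rabs (x 0%nat)) (2 * d1) (2 * d1') * (partial phi 0 x) ^ 2
  + pow2 (Rabs (x 0%nat)) (2 * d2) (2 * d2')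
      * sum_1_to m (fun i => (partial phi i x) ^ 2).

(* Riemann integral over [a,b] as a total function (value of the
   Riemann integral when f is Riemann integrable on [a,b]). *)
Definition Rint (f : R -> R) (a b : R) : R :=
  epsilon (inhabits 0)
    (fun l => exists pr : Riemann_integrable f a b, RiemannInt pr = l).

Fixpoint cube_int (k : nat) (F : (nat -> R) -> R) (x : nat -> R) : R :=
  match k with
  | O => F x
  | S k' => Rint (fun t => cube_int k' F (upd x (S k') t)) (-1) 1
  end.

(* \int_0^1 dx_1 \int_{[-1,1]^m} dx_2 F(x_1,x_2)  (iterated; by Fubini equal
   to the Lebesgue integral for the continuous integrands considered). *)
Definition box_int (m : nat) (F : (nat -> R) -> R) : R :=
  Rint (fun t => cube_int m F (upd (fun _ => 0) 0 t)) 0 1.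

Definition avg (m : nat) (phi : (nat -> R) -> R) : R :=
  box_int m phi / 2 ^ m.

(* Main.v *)
Require Import Defs.
From Stdlib Require Import Reals Lra Lia ClassicalEpsilon FunctionalExtensionality Classical List.
From Coquelicot Require Import Coquelicot.
Require Import Defs.
Open Scope R_scope.

Lemma upd_eq x j t : upd x j t j = t.
Proof. unfold upd; now rewrite Nat.eqb_refl. Qed.
Lemma upd_neq x j t i : i <> j -> upd x j t i = x i.
Proof. intros H; unfold upd; destruct (Nat.eqb_spec i j); congruence. Qed.
Lemma upd_same x j : upd x j (x j) = x.
Proof. apply functional_extensionality; intro i; unfold upd; destruct (Nat.eqb_spec i j); congruence. Qed.
Lemma upd_upd x j a b : upd (upd x j a) j b = upd x j b.
Proof. apply functional_extensionality; intro i; unfold upd; destruct (Nat.eqb_spec i j); congruence. Qed.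
Lemma upd_comm x i j a b : i <> j -> upd (upd x i a) j b = upd (upd x j b) i a.
Proof. intros H; apply functional_extensionality; intro k; unfold upd;
  destruct (Nat.eqb_spec k j); destruct (Nat.eqb_spec k i); congruence. Qed.

Lemma Rint_RInt (f : R -> R) a b : ex_RInt f a b -> Rint f a b = RInt f a b.
Proof.
  intros H. unfold Rint.
  assert (HP : exists l, (fun l => exists pr : Riemann_integrable f a b, RiemannInt pr = l) l).
  { exists (RInt f a b). exists (ex_RInt_Reals_0 f a b H). now rewrite <- RInt_Reals. }
  destruct (epsilon_spec (inhabits 0) _ HP) as [pr Hpr].
  rewrite <- Hpr. now rewrite <- RInt_Reals.
Qed.

Lemma cont_ed (f : R -> R) x :
  (forall eps, eps > 0 -> exists d, d > 0 /\ forall y, Rabs (y - x) < d -> Rabs (f y - f x) < eps) ->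
  continuous f x.
Proof.
  intros H. apply continuity_pt_filterlim.
  intros eps Heps. destruct (H eps Heps) as [d [Hd Hy]].
  exists d; split; [lra|]. intros y [_ Hy2]. apply Hy. exact Hy2.
Qed.

Definition RI (f : R -> R) (a b : R) : R := RInt f a b.

Lemma RI_lin (f g : R -> R) a b c1 c2 : ex_RInt f a b -> ex_RInt g a b ->
  RI (fun t => c1 * f t + c2 * g t) a b = c1 * RI f a b + c2 * RI g a b.
Proof.
  intros Hf Hg. unfold RI. apply is_RInt_unique.
  exact (is_RInt_plus (fun t => scal c1 (f t)) (fun t => scal c2 (g t)) a b _ _
     (is_RInt_scal _ _ _ c1 _ (RInt_correct f a b Hf))
     (is_RInt_scal _ _ _ c2 _ (RInt_correct g a b Hg))).
Qed.

Lemma ex_RI_lin (f g : R -> R) a b c1 c2 : ex_RInt f a b -> ex_RInt g a b ->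
  ex_RInt (fun t => c1 * f t + c2 * g t) a b.
Proof.
  intros Hf Hg.
  exact (ex_RInt_plus (fun t => scal c1 (f t)) (fun t => scal c2 (g t)) a b
     (ex_RInt_scal _ _ _ c1 Hf) (ex_RInt_scal _ _ _ c2 Hg)).
Qed.

Lemma RI_const a b c : RI (fun _ => c) a b = (b - a) * c.
Proof. unfold RI. rewrite RInt_const. reflexivity. Qed.

Lemma RI_le (f g : R -> R) a b : a <= b -> ex_RInt f a b -> ex_RInt g a b ->
  (forall x, a <= x <= b -> f x <= g x) -> RI f a b <= RI g a b.
Proof. intros; unfold RI; apply RInt_le; auto. intros; apply H2; lra. Qed.

Lemma RI_ge0 (f : R -> R) a b : a <= b -> ex_RInt f a b ->
  (forall x, a <= x <= b -> 0 <= f x) -> 0 <= RI f a b.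
Proof. intros; unfold RI; apply RInt_ge_0; auto. intros; apply H1; lra. Qed.

Lemma ex_RI_cont (f : R -> R) a b : a <= b -> (forall x, a <= x <= b -> continuous f x) -> ex_RInt f a b.
Proof. intros Hab H; apply (ex_RInt_continuous (V:=R_CompleteNormedModule)). intros z Hz.
  rewrite Rmin_left in Hz by lra; rewrite Rmax_right in Hz by lra. auto. Qed.

Lemma RI_Chasles (f : R -> R) a b c : ex_RInt f a b -> ex_RInt f b c -> RI f a b + RI f b c = RI f a c.
Proof. intros; unfold RI; exact (RInt_Chasles f a b c H H0). Qed.

Definition contR (f : R -> R) := forall x, continuous f x.

Lemma contR_st (f : R -> R) : (forall x, continuity_pt f x) -> contR f.
Proof. intros H x; apply continuity_pt_filterlim; apply H. Qed.
Lemma contR_pt (f : R -> R) : contR f -> forall x, continuity_pt f x.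
Proof. intros H x; apply continuity_pt_filterlim; apply H. Qed.

Lemma contR_plus f g : contR f -> contR g -> contR (fun t => f t + g t).
Proof. intros Hf Hg; apply contR_st; intro x.
  apply (continuity_pt_plus f g); apply contR_pt; auto. Qed.
Lemma contR_mult f g : contR f -> contR g -> contR (fun t => f t * g t).
Proof. intros Hf Hg; apply contR_st; intro x.
  apply (continuity_pt_mult f g); apply contR_pt; auto. Qed.
Lemma contR_const c : contR (fun _ => c).
Proof. apply contR_st; intro x; apply continuity_pt_const; intros a b; auto. Qed.
Lemma contR_id : contR (fun t => t).
Proof. apply contR_st; intro x; apply continuity_pt_id. Qed.
Lemma contR_minus f g : contR f -> contR g -> contR (fun t => f t - g t).
Proof. intros Hf Hg; apply contR_st; intro x.
  apply (continuity_pt_minus f g); apply contR_pt; auto. Qed.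
Lemma contR_sq f : contR f -> contR (fun t => f t ^ 2).
Proof. intros Hf. assert (E : (fun t => f t ^ 2) = (fun t => f t * f t)).
  { apply functional_extensionality; intro; ring. }
  rewrite E; apply contR_mult; auto. Qed.
Lemma contR_ext f g : contR f -> (forall x, f x = g x) -> contR g.
Proof. intros Hf E. replace g with f; auto. apply functional_extensionality; auto. Qed.

Lemma RI_ext (f g : R -> R) a b : (forall x, f x = g x) -> RI f a b = RI g a b.
Proof. intros H; unfold RI; apply (RInt_ext (V:=R_CompleteNormedModule)); intros; apply H. Qed.

Lemma ex_RI (f : R -> R) a b : a <= b -> contR f -> ex_RInt f a b.
Proof. intros; apply ex_RI_cont; auto. Qed.

Lemma contR_deriv (g g' : R -> R) : (forall t, is_derive g t (g' t)) -> contR g.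
Proof. intros H x. apply (ex_derive_continuous (V:=R_NormedModule)). exists (g' x); auto. Qed.

Lemma FTC (F F' : R -> R) a b : (forall x, is_derive F x (F' x)) -> contR F' ->
  RI F' a b = F b - F a.
Proof. intros H1 H2. unfold RI; apply is_RInt_unique.
  exact (is_RInt_derive F F' a b (fun x _ => H1 x) (fun x _ => H2 x)). Qed.

Lemma expand_sq (h : R -> R) a b c : a <= b -> contR h ->
  RI (fun t => (h t - c) ^ 2) a b = RI (fun t => h t ^ 2) a b - 2 * c * RI h a b + (b - a) * c ^ 2.
Proof.
  intros Hab Hh.
  assert (Hs : contR (fun t => h t ^ 2)) by (apply contR_sq; auto).
  transitivity (RI (fun t => 1 * (fun t => 1 * h t ^ 2 + (- 2 * c) * h t) t + (c^2) * (fun _ => 1) t) a b).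
  { apply RI_ext; intros; ring. }
  rewrite RI_lin; [| apply ex_RI_lin; apply ex_RI; auto | apply ex_RI; auto; apply contR_const].
  rewrite RI_lin by (apply ex_RI; auto). rewrite RI_const. ring.
Qed.

Lemma var_min (h : R -> R) a b c : a < b -> contR h ->
  RI (fun t => (h t - RI h a b / (b - a)) ^ 2) a b <= RI (fun t => (h t - c) ^ 2) a b.
Proof.
  intros Hab Hh. rewrite !expand_sq by (auto; lra).
  set (I := RI h a b).
  set (J := RI (fun t => h t ^ 2) a b).
  assert (E : J - 2 * c * I + (b - a) * c ^ 2 - (J - 2 * (I / (b - a)) * I + (b - a) * (I / (b - a)) ^ 2)
     = (b - a) * (c - I / (b - a)) ^ 2) by (field; lra).
  assert (0 <= (b - a) * (c - I / (b - a)) ^ 2).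
  { apply Rmult_le_pos; [lra| apply pow2_ge_0]. }
  lra.
Qed.

Lemma CS1 (h : R -> R) a b : a < b -> contR h ->
  (RI h a b) ^ 2 <= (b - a) * RI (fun t => h t ^ 2) a b.
Proof.
  intros Hab Hh.
  assert (H0 : 0 <= RI (fun t => (h t - RI h a b / (b - a)) ^ 2) a b).
  { apply RI_ge0; [lra| apply ex_RI; [lra|]; apply contR_sq, contR_minus; auto; apply contR_const|].
    intros; apply pow2_ge_0. }
  rewrite expand_sq in H0 by (auto; lra).
  set (I := RI h a b) in *. set (J := RI (fun t => h t ^ 2) a b) in *.
  assert (E : (b - a) * J - I ^ 2 = (b - a) * (J - 2 * (I / (b - a)) * I + (b - a) * (I / (b - a)) ^ 2))
    by (field; lra).
  assert (0 <= (b - a) * (J - 2 * (I / (b - a)) * I + (b - a) * (I / (b - a)) ^ 2))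
    by (apply Rmult_le_pos; lra).
  lra.
Qed.

Lemma isd_mult (f g : R -> R) x df dg : is_derive f x df -> is_derive g x dg ->
  is_derive (fun t => f t * g t) x (df * g x + f x * dg).
Proof. rewrite !is_derive_Reals; intros; apply (derivable_pt_lim_mult f g x df dg); auto. Qed.
Lemma isd_plus (f g : R -> R) x df dg : is_derive f x df -> is_derive g x dg ->
  is_derive (fun t => f t + g t) x (df + dg).
Proof. rewrite !is_derive_Reals; intros; apply (derivable_pt_lim_plus f g x df dg); auto. Qed.
Lemma isd_minus (f g : R -> R) x df dg : is_derive f x df -> is_derive g x dg ->
  is_derive (fun t => f t - g t) x (df - dg).
Proof. rewrite !is_derive_Reals; intros; apply (derivable_pt_lim_minus f g x df dg); auto. Qed.
Lemma isd_const c x : is_derive (fun _ => c) x 0.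
Proof. rewrite is_derive_Reals; apply derivable_pt_lim_const. Qed.
Lemma isd_id x : is_derive (fun t => t) x 1.
Proof. rewrite is_derive_Reals; apply derivable_pt_lim_id. Qed.
Lemma isd_ext (f : R -> R) (x d d' : R) : is_derive f x d -> d = d' -> is_derive f x d'.
Proof. intros; subst; auto. Qed.

Lemma RI_opp (q : R -> R) a b : ex_RInt q a b -> RI (fun t => - q t) a b = - RI q a b.
Proof. intros Hq. transitivity (RI (fun t => -1 * q t + 0 * q t) a b).
  apply RI_ext; intros; ring. rewrite RI_lin by auto. ring. Qed.

Lemma L1 (g g' : R -> R) : (forall t, is_derive g t (g' t)) -> contR g' ->
  RI (fun t => (g t - RI g (-1) 1 / 2) ^ 2) (-1) 1 <= 16 * RI (fun t => g' t ^ 2) (-1) 1.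
Proof.
  intros Hd Hc. assert (Hg : contR g) by (eapply contR_deriv; eauto).
  set (w := fun t => g t - g (-1)).
  assert (Hw : contR w) by (apply contR_minus; auto; apply contR_const).
  set (q := fun t => (t - 1) * 2 * w t * g' t).
  assert (Hq : contR q).
  { unfold q. repeat apply contR_mult; auto using contR_const.
    apply contR_minus; auto using contR_id, contR_const. }
  assert (Hw2 : contR (fun t => w t ^ 2)) by (apply contR_sq; auto).
  assert (Hg2 : contR (fun t => g' t ^ 2)) by (apply contR_sq; auto).
  assert (HF : RI (fun t => 1 * (w t ^ 2) + 1 * q t) (-1) 1 = 0).
  { rewrite (FTC (fun t => (t - 1) * (w t * w t))).
    - unfold w. ring.
    - intro x. eapply isd_ext.
      + apply isd_mult. apply isd_minus; [apply isd_id| apply isd_const].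
        apply isd_mult; unfold w; (apply isd_minus; [apply Hd | apply isd_const]).
      + unfold q; ring.
    - apply contR_plus; apply contR_mult; auto using contR_const. }
  rewrite RI_lin in HF by (apply ex_RI; auto; lra).
  assert (Hle : RI (fun t => - q t) (-1) 1 <= RI (fun t => /2 * (w t ^ 2) + 8 * (g' t ^ 2)) (-1) 1).
  { apply RI_le; try lra.
    - apply ex_RI; [lra|]. apply contR_ext with (fun t => -1 * q t); [|intros; ring].
      apply contR_mult; auto using contR_const.
    - apply ex_RI_lin; apply ex_RI; auto; lra.
    - intros t Ht. unfold q. assert ((t - 1) ^ 2 <= 4) by nra.
      assert (0 <= (w t + 2 * (t - 1) * g' t) ^ 2) by apply pow2_ge_0.
      assert (0 <= g' t ^ 2) by apply pow2_ge_0. nra. }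
  rewrite RI_opp in Hle by (apply ex_RI; auto; lra).
  rewrite RI_lin in Hle by (apply ex_RI; auto; lra).
  assert (Hvm := var_min g (-1) 1 (g (-1)) ltac:(lra) Hg).
  replace (1 - -1) with 2 in Hvm by ring.
  fold w in Hvm. unfold w in *. lra.
Qed.

Lemma L2 (W W' Z : R -> R) : (forall s, is_derive W s (W' s)) -> contR W' -> contR Z ->
  W 1 = 0 -> (forall s, 0 <= s <= 1 -> - (s * W' s) <= W s / 2 + 2 * Z s) ->
  RI W 0 1 <= 4 * RI Z 0 1.
Proof.
  intros Hd Hc HZ H1 Hp. assert (HW : contR W) by (eapply contR_deriv; eauto).
  assert (Hq : contR (fun s => s * W' s)) by (apply contR_mult; auto using contR_id).
  assert (HF : RI (fun s => 1 * W s + 1 * (s * W' s)) 0 1 = 1 * W 1 - 0 * W 0).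
  { apply (FTC (fun s => s * W s)).
    - intro x. eapply isd_ext. apply isd_mult; [apply isd_id | apply Hd]. cbv beta; ring.
    - apply contR_plus; apply contR_mult; auto using contR_const. }
  rewrite RI_lin in HF by (apply ex_RI; auto; lra).
  assert (Hle : RI (fun s => - (s * W' s)) 0 1 <= RI (fun s => /2 * W s + 2 * Z s) 0 1).
  { apply RI_le; try lra.
    - apply ex_RI; [lra|]. apply contR_ext with (fun t => -1 * (t * W' t)); [|intros; ring].
      apply contR_mult; auto using contR_const.
    - apply ex_RI_lin; apply ex_RI; auto; lra.
    - intros t Ht. specialize (Hp t Ht). lra. }
  rewrite RI_opp in Hle by (apply ex_RI; auto; lra).
  rewrite RI_lin in Hle by (apply ex_RI; auto; lra).
  lra.
Qed.

Implicit Types (F G H phi : (nat -> R) -> R) (x y : nat -> R) (m k j i : nat).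

Lemma Rabs_le_inv a b : Rabs a <= b -> - b <= a <= b.
Proof. intros H. pose proof (Rle_abs a). pose proof (Rle_abs (- a)). rewrite Rabs_Ropp in H1. lra. Qed.

Definition closeR (m : nat) (d : R) (x y : nat -> R) := forall i, (i <= m)%nat -> Rabs (x i - y i) < d.
Definition UCm (m : nat) (F : (nat -> R) -> R) := forall eps, eps > 0 -> exists d, d > 0 /\
  forall x y, closeR m d x y -> Rabs (F x - F y) < eps.
Definition Bnd (F : (nat -> R) -> R) := exists B, forall x, Rabs (F x) <= B.
Definition Good m F := Bnd F /\ UCm m F.

Lemma Good_const m c : Good m (fun _ => c).
Proof. split. exists (Rabs c); intros; lra. intros e He; exists 1; split; [lra|]; intros.
  rewrite Rminus_diag, Rabs_R0; lra. Qed.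

Lemma Good_lin m F G a b : Good m F -> Good m G -> Good m (fun y => a * F y + b * G y).
Proof.
  intros [[BF HBF] HF] [[BG HBG] HG]. split.
  - exists (Rabs a * BF + Rabs b * BG). intro x.
    eapply Rle_trans; [apply Rabs_triang|]. rewrite !Rabs_mult.
    apply Rplus_le_compat; apply Rmult_le_compat_l; auto using Rabs_pos.
  - intros e He.
    set (e' := e / (2 * (Rabs a + Rabs b + 1))).
    assert (He' : e' > 0). { unfold e'. apply Rdiv_lt_0_compat; auto. pose proof (Rabs_pos a); pose proof (Rabs_pos b); lra. }
    destruct (HF e' He') as [d1 [Hd1 H1]]. destruct (HG e' He') as [d2 [Hd2 H2]].
    exists (Rmin d1 d2); split; [apply Rmin_pos; auto|]. intros x y Hxy.
    assert (C1 : closeR m d1 x y) by (intros i Hi; specialize (Hxy i Hi); pose proof (Rmin_l d1 d2); lra).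
    assert (C2 : closeR m d2 x y) by (intros i Hi; specialize (Hxy i Hi); pose proof (Rmin_r d1 d2); lra).
    specialize (H1 x y C1). specialize (H2 x y C2).
    replace (a * F x + b * G x - (a * F y + b * G y)) with (a * (F x - F y) + b * (G x - G y)) by ring.
    eapply Rle_lt_trans; [apply Rabs_triang|]. rewrite !Rabs_mult.
    assert (Rabs a * Rabs (F x - F y) <= Rabs a * e') by (apply Rmult_le_compat_l; auto using Rabs_pos; lra).
    assert (Rabs b * Rabs (G x - G y) <= Rabs b * e') by (apply Rmult_le_compat_l; auto using Rabs_pos; lra).
    assert ((Rabs a + Rabs b) * e' < e).
    { unfold e'. pose proof (Rabs_pos a); pose proof (Rabs_pos b).
      apply Rmult_lt_reg_r with (2 * (Rabs a + Rabs b + 1)); [lra|].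
      field_simplify; [|lra]. nra. }
    nra.
Qed.

Lemma Bnd_pos F B : (forall x, Rabs (F x) <= B) -> 0 <= B.
Proof. intros H. specialize (H (fun _ => 0)). pose proof (Rabs_pos (F (fun _ => 0))). lra. Qed.

Lemma Good_mult m F G : Good m F -> Good m G -> Good m (fun y => F y * G y).
Proof.
  intros [[BF HBF] HF] [[BG HBG] HG].
  pose proof (Bnd_pos _ _ HBF). pose proof (Bnd_pos _ _ HBG). split.
  - exists (BF * BG). intro x. rewrite Rabs_mult. apply Rmult_le_compat; auto using Rabs_pos.
  - intros e He.
    set (e' := e / (2 * (BF + BG + 1))).
    assert (He' : e' > 0) by (unfold e'; apply Rdiv_lt_0_compat; lra).
    destruct (HF e' He') as [d1 [Hd1 H1]]. destruct (HG e' He') as [d2 [Hd2 H2]].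
    exists (Rmin d1 d2); split; [apply Rmin_pos; auto|]. intros x y Hxy.
    assert (C1 : closeR m d1 x y) by (intros i Hi; specialize (Hxy i Hi); pose proof (Rmin_l d1 d2); lra).
    assert (C2 : closeR m d2 x y) by (intros i Hi; specialize (Hxy i Hi); pose proof (Rmin_r d1 d2); lra).
    specialize (H1 x y C1). specialize (H2 x y C2).
    replace (F x * G x - F y * G y) with (F x * (G x - G y) + G y * (F x - F y)) by ring.
    eapply Rle_lt_trans; [apply Rabs_triang|]. rewrite !Rabs_mult.
    assert (Rabs (F x) * Rabs (G x - G y) <= BF * e') by (apply Rmult_le_compat; auto using Rabs_pos; lra).
    assert (Rabs (G y) * Rabs (F x - F y) <= BG * e') by (apply Rmult_le_compat; auto using Rabs_pos; lra).
    assert ((BF + BG) * e' < e).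
    { unfold e'. apply Rmult_lt_reg_r with (2 * (BF + BG + 1)); [lra|].
      field_simplify; [|lra]. nra. }
    nra.
Qed.

Lemma Good_ext m F G : Good m F -> (forall y, F y = G y) -> Good m G.
Proof. intros H E. replace G with F; auto. apply functional_extensionality; auto. Qed.

Lemma Good_sq m F : Good m F -> Good m (fun y => F y ^ 2).
Proof. intros H. apply Good_ext with (fun y => F y * F y). apply Good_mult; auto. intros; ring. Qed.

Lemma Good_minus m F G : Good m F -> Good m G -> Good m (fun y => F y - G y).
Proof. intros. apply Good_ext with (fun y => 1 * F y + (-1) * G y). apply Good_lin; auto. intros; ring. Qed.

Lemma Good_plus m F G : Good m F -> Good m G -> Good m (fun y => F y + G y).
Proof. intros. apply Good_ext with (fun y => 1 * F y + 1 * G y). apply Good_lin; auto. intros; ring. Qed.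

Lemma Good_scal m F c : Good m F -> Good m (fun y => c * F y).
Proof. intros. apply Good_ext with (fun y => c * F y + 0 * F y). apply Good_lin; auto. intros; ring. Qed.

Lemma closeR_upd m d x y j c : d > 0 -> closeR m d x y -> closeR m d (upd x j c) (upd y j c).
Proof. intros Hd H i Hi. unfold upd. destruct (Nat.eqb i j). rewrite Rminus_diag, Rabs_R0; lra. auto. Qed.

Lemma Good_upd m F j c : Good m F -> Good m (fun y => F (upd y j c)).
Proof. intros [HB HU]. split. destruct HB as [B HB]; exists B; auto.
  intros e He. destruct (HU e He) as [d [Hd H]]. exists d; split; auto. intros x y Hxy.
  apply H. apply closeR_upd; auto. Qed.

Lemma Good_shift m F j h : Good m F -> Good m (fun y => F (upd y j (y j + h))).
Proof. intros [HB HU]. split. destruct HB as [B HB]; exists B; auto.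
  intros e He. destruct (HU e He) as [d [Hd H]]. exists d; split; auto. intros x y Hxy.
  apply H. intros i Hi. unfold upd. destruct (Nat.eqb_spec i j).
  subst. replace (x j + h - (y j + h)) with (x j - y j) by ring. auto. auto. Qed.

Lemma Good_cont m F x j : Good m F -> contR (fun t => F (upd x j t)).
Proof. intros [_ HU] t0. apply cont_ed. intros e He. destruct (HU e He) as [d [Hd H]].
  exists d; split; auto. intros y Hy. apply H. intros i Hi. unfold upd. destruct (Nat.eqb i j); auto.
  rewrite Rminus_diag, Rabs_R0; lra. Qed.

Lemma RI_abs (g : R -> R) M : contR g -> (forall t, Rabs (g t) <= M) -> Rabs (RI g (-1) 1) <= 2 * M.
Proof. intros Hg H. unfold RI. replace 2 with (1 - -1) by ring.
  apply abs_RInt_le_const; auto. lra. apply ex_RI; auto; lra. Qed.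

Lemma cube_S k F x : cube_int (S k) F x = Rint (fun t => cube_int k F (upd x (S k) t)) (-1) 1.
Proof. reflexivity. Qed.

Lemma cube_S_RI m k F x : Good m (cube_int k F) ->
  cube_int (S k) F x = RI (fun t => cube_int k F (upd x (S k) t)) (-1) 1.
Proof. intros H. rewrite cube_S. apply Rint_RInt. apply ex_RI; [lra|]. apply (Good_cont m); auto. Qed.

Lemma Good_cube m k F : Good m F -> Good m (cube_int k F).
Proof.
  intros HF. induction k as [|k IH]; [exact HF|].
  destruct IH as [[B HB] HU]. assert (IH : Good m (cube_int k F)) by (split; [exists B|]; auto).
  split.
  - exists (2 * B). intro x. rewrite (cube_S_RI m) by auto. apply RI_abs; auto. apply (Good_cont m); auto.
  - intros e He. destruct (HU (e / 4)) as [d [Hd H]]; [lra|].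
    exists d; split; auto. intros x y Hxy. rewrite !(cube_S_RI m) by auto.
    unfold RI. rewrite <- (RInt_minus (V:=R_CompleteNormedModule)) by (apply ex_RI; [lra|]; apply (Good_cont m); auto).
    fold (RI (fun t => minus (cube_int k F (upd x (S k) t)) (cube_int k F (upd y (S k) t))) (-1) 1).
    eapply Rle_lt_trans. apply RI_abs with (M := e / 4).
    + apply contR_minus; apply (Good_cont m); auto.
    + intro t. left. apply H. apply closeR_upd; auto.
    + lra.
Qed.

Lemma fun_ext_R (f g : R -> R) : (forall t, f t = g t) -> f = g.
Proof. apply functional_extensionality. Qed.

Lemma Cube_lin m k F G a b x : Good m F -> Good m G ->
  cube_int k (fun y => a * F y + b * G y) x = a * cube_int k F x + b * cube_int k G x.
Proof.
  intros HF HG. revert x. induction k as [|k IH]; intro x; [reflexivity|].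
  rewrite cube_S. rewrite (fun_ext_R (fun t => cube_int k (fun y => a * F y + b * G y) (upd x (S k) t)) (fun t => a * cube_int k F (upd x (S k) t) + b * cube_int k G (upd x (S k) t)))
    by (intro; apply IH).
  rewrite Rint_RInt.
  - fold (RI (fun t => a * cube_int k F (upd x (S k) t) + b * cube_int k G (upd x (S k) t)) (-1) 1).
    rewrite RI_lin by (apply ex_RI; [lra|]; apply (Good_cont m); apply Good_cube; auto).
    rewrite !(cube_S_RI m) by (apply Good_cube; auto). reflexivity.
  - apply ex_RI_lin; apply ex_RI; try lra; apply (Good_cont m); apply Good_cube; auto.
Qed.

Lemma Cube_indep k F j : (forall y t, F (upd y j t) = F y) -> (j = 0 \/ k < j)%nat ->
  forall x t, cube_int k F (upd x j t) = cube_int k F x.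
Proof.
  intros HF. induction k as [|k IH]; intros Hj x t; [apply HF|].
  rewrite !cube_S. f_equal. apply fun_ext_R. intro s.
  rewrite upd_comm by lia. apply IH. lia.
Qed.

Lemma Cube_over k F i : (1 <= i <= k)%nat -> forall x t, cube_int k F (upd x i t) = cube_int k F x.
Proof.
  induction k as [|k IH]; intros Hi x t; [lia|].
  rewrite !cube_S. f_equal. apply fun_ext_R. intro s.
  destruct (Nat.eq_dec i (S k)) as [->|Hne].
  - rewrite upd_upd. reflexivity.
  - rewrite upd_comm by lia. apply IH. lia.
Qed.

Lemma Cube_freeze k F j : (j = 0 \/ k < j)%nat ->
  forall x, cube_int k F x = cube_int k (fun y => F (upd y j (x j))) x.
Proof.
  induction k as [|k IH]; intros Hj x.
  - simpl. rewrite upd_same. reflexivity.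
  - rewrite !cube_S. f_equal. apply fun_ext_R. intro s.
    rewrite IH by lia. rewrite upd_neq by lia. reflexivity.
Qed.

Lemma Cube_H m k H G x : (forall y i t, (1 <= i <= k)%nat -> H (upd y i t) = H y) -> Good m G ->
  cube_int k (fun y => H y * G y) x = H x * cube_int k G x.
Proof.
  intros HH HG. revert x. induction k as [|k IHk]; intro x; [reflexivity|].
  rewrite cube_S.
  rewrite (fun_ext_R (fun t => cube_int k (fun y => H y * G y) (upd x (S k) t)) (fun t => H x * cube_int k G (upd x (S k) t) + 0 * cube_int k G (upd x (S k) t))).
  - rewrite Rint_RInt.
    + fold (RI (fun t => H x * cube_int k G (upd x (S k) t) + 0 * cube_int k G (upd x (S k) t)) (-1) 1).
      rewrite RI_lin by (apply ex_RI; [lra|]; apply (Good_cont m); apply Good_cube; auto).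
      rewrite (cube_S_RI m) by (apply Good_cube; auto). ring.
    + apply ex_RI_lin; apply ex_RI; try lra; apply (Good_cont m); apply Good_cube; auto.
  - intro t. rewrite IHk. rewrite HH by lia. ring. intros; apply HH; lia.
Qed.

Lemma Cube_one m k x : cube_int k (fun _ => 1) x = 2 ^ k.
Proof.
  revert x. induction k as [|k IH]; intro x; [reflexivity|].
  rewrite (cube_S_RI m) by (apply Good_cube, Good_const).
  rewrite (RI_ext _ (fun _ => 2 ^ k)) by (intro; apply IH). rewrite RI_const. simpl; ring.
Qed.

Lemma Cube_N m k N x : (forall y i t, (1 <= i <= k)%nat -> N (upd y i t) = N y) ->
  cube_int k N x = 2 ^ k * N x.
Proof.
  intros HN. transitivity (cube_int k (fun y => N y * (fun _ => 1) y) x).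
  - f_equal. apply functional_extensionality; intro; ring.
  - rewrite (Cube_H m) by (auto; apply Good_const). rewrite (Cube_one m). ring.
Qed.

Lemma Cube_mono m k F G x : Good m F -> Good m G -> (forall y, F y <= G y) ->
  cube_int k F x <= cube_int k G x.
Proof.
  intros HF HG Hle. revert x. induction k as [|k IH]; intro x; [apply Hle|].
  rewrite !(cube_S_RI m) by (apply Good_cube; auto).
  apply RI_le; try lra; try (apply ex_RI; [lra|]; apply (Good_cont m); apply Good_cube; auto).
  intros; apply IH.
Qed.

Lemma Cube_nonneg m k F x : Good m F -> (forall y, 0 <= F y) -> 0 <= cube_int k F x.
Proof.
  intros HF H. replace 0 with (2 ^ k * 0) by ring. rewrite <- (Cube_N m k (fun _ => 0) x) by auto.
  apply (Cube_mono m); auto. apply Good_const.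
Qed.

Lemma Cube_abs m k F x e : Good m F -> (forall y, Rabs (F y) <= e) -> Rabs (cube_int k F x) <= 2 ^ k * e.
Proof.
  intros HF H. apply Rabs_le. split.
  - replace (- (2 ^ k * e)) with (2 ^ k * (- e)) by ring. rewrite <- (Cube_N m k (fun _ => - e) x) by auto.
    apply (Cube_mono m); auto. apply Good_const. intro y; specialize (H y). apply Rabs_le_inv in H; lra.
  - rewrite <- (Cube_N m k (fun _ => e) x) by auto.
    apply (Cube_mono m); auto. apply Good_const. intro y; specialize (H y). apply Rabs_le_inv in H; lra.
Qed.

Lemma Cube_Jensen m k F x : Good m F -> (cube_int k F x) ^ 2 <= 2 ^ k * cube_int k (fun y => F y ^ 2) x.
Proof.
  intros HF. revert x. induction k as [|k IH]; intro x; [simpl; lra|].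
  assert (HF2 : Good m (fun y => F y ^ 2)) by (apply Good_sq; auto).
  rewrite !(cube_S_RI m) by (apply Good_cube; auto).
  eapply Rle_trans. apply CS1; [lra| apply (Good_cont m); apply Good_cube; auto].
  replace (1 - -1) with 2 by ring.
  replace (2 ^ S k * RI (fun t => cube_int k (fun y => F y ^ 2) (upd x (S k) t)) (-1) 1) with
    (2 * RI (fun t => 2 ^ k * cube_int k (fun y => F y ^ 2) (upd x (S k) t) + 0 * 0) (-1) 1).
  - apply Rmult_le_compat_l; [lra|]. apply RI_le; try lra.
    + apply ex_RI; [lra|]. apply contR_sq. apply (Good_cont m); apply Good_cube; auto.
    + apply ex_RI; [lra|]. apply contR_ext with (fun t => 2 ^ k * cube_int k (fun y => F y ^ 2) (upd x (S k) t) + 0 * (fun _ => 0) t); [|intros; ring].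
      apply contR_plus; apply contR_mult; try apply contR_const. apply (Good_cont m); apply Good_cube; auto.
    + intros t _. rewrite Rmult_0_l, Rplus_0_r. apply IH.
  - rewrite (RI_lin (fun t => cube_int k (fun y => F y ^ 2) (upd x (S k) t)) (fun _ => 0)).
    + simpl; ring.
    + apply ex_RI; [lra|]. apply (Good_cont m); apply Good_cube; auto.
    + apply ex_RI; [lra|]. apply contR_const.
Qed.

Definition UD j F F' := forall eps, eps > 0 -> exists d, d > 0 /\
  forall x h, h <> 0 -> Rabs h < d -> Rabs ((F (upd x j (x j + h)) - F x) / h - F' x) <= eps.

Lemma Cube_shift k F j x c : (j = 0 \/ k < j)%nat ->
  cube_int k F (upd x j c) = cube_int k (fun y => F (upd y j c)) x.
Proof.
  intros Hj. rewrite (Cube_freeze k F j Hj). rewrite upd_eq.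
  apply Cube_indep; auto. intros y t. rewrite upd_upd. reflexivity.
Qed.

Lemma Cube_UD m k F F' j : Good m F -> Good m F' -> UD j F F' -> (j = 0 \/ k < j)%nat ->
  UD j (cube_int k F) (cube_int k F').
Proof.
  intros HF HF' HU Hj e He.
  destruct (HU (e / 2 ^ k)) as [d [Hd H]]. { apply Rdiv_lt_0_compat; auto. apply pow_lt; lra. }
  exists d; split; auto. intros x h Hh Hhd.
  rewrite (Cube_shift k F j x _ Hj).
  rewrite (Cube_freeze k (fun y => F (upd y j (x j + h))) j Hj x).
  set (Fs := fun y => F (upd y j (y j + h))).
  assert (E : cube_int k (fun y => F (upd (upd y j (x j)) j (x j + h))) x = cube_int k Fs x).
  { symmetry. rewrite (Cube_freeze k Fs j Hj). f_equal. apply functional_extensionality; intro y.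
    unfold Fs. rewrite !upd_upd, upd_eq. reflexivity. }
  rewrite E.
  assert (HFs : Good m Fs) by (apply Good_shift; auto).
  assert (HD : Good m (fun y => 1 * Fs y + (-1) * F y)) by (apply Good_lin; auto).
  replace ((cube_int k Fs x - cube_int k F x) / h - cube_int k F' x) with
    (cube_int k (fun y => (/ h) * (fun y => 1 * Fs y + (-1) * F y) y + (-1) * F' y) x).
  - replace e with (2 ^ k * (e / 2 ^ k)) by (field; apply pow_nonzero; lra).
    apply (Cube_abs m). apply Good_lin; auto.
    intro y. specialize (H y h Hh Hhd). unfold Fs.
    replace (/ h * (1 * F (upd y j (y j + h)) + -1 * F y) + -1 * F' y) with
       ((F (upd y j (y j + h)) - F y) / h - F' y) by (field; auto). auto.
  - rewrite (Cube_lin m) by auto. rewrite (Cube_lin m) by auto. field. auto.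
Qed.

Lemma UD_deriv j F F' : UD j F F' -> forall x t, is_derive (fun s => F (upd x j s)) t (F' (upd x j t)).
Proof.
  intros HU x t. apply is_derive_Reals. intros e He.
  destruct (HU (e / 2)) as [d [Hd H]]; [lra|].
  exists (mkposreal d Hd). intros h Hh Hhd. simpl in Hhd.
  specialize (H (upd x j t) h Hh Hhd). rewrite upd_eq, !upd_upd in H.
  lra.
Qed.


Fixpoint toT (n : nat) (x : nat -> R) : Compactness.Tn n R :=
  match n with 0 => tt | S n' => (x 0%nat, toT n' (fun i => x (S i))) end.
Fixpoint fromT (n : nat) : Compactness.Tn n R -> nat -> R :=
  match n with
  | 0 => fun _ _ => 0
  | S n' => fun t i => match i with 0 => fst t | S i' => fromT n' (snd t) i' end
  end.

Lemma bounded_toT n a b x : (forall i, (i < n)%nat -> a <= x i <= b) ->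
  bounded_n n (toT n (fun _ => a)) (toT n (fun _ => b)) (toT n x).
Proof.
  revert x; induction n as [|n IH]; intros x H; simpl; auto.
  split. apply H; lia. apply IH. intros i Hi. apply H; lia.
Qed.

Lemma close_toT n d x t : close_n n d (toT n x) t -> forall i, (i < n)%nat -> Rabs (x i - fromT n t i) < d.
Proof.
  revert x; induction n as [|n IH]; intros x H i Hi; [lia|].
  destruct t as [t1 t2]. simpl in H. destruct H as [H1 H2].
  destruct i as [|i]; simpl; auto. apply (IH t2 (fun i => x (S i))); auto. lia.
Qed.

Definition zero_out m Rad F := forall x, (exists i, (i <= m)%nat /\ Rabs (x i) > Rad) -> F x = 0.

Lemma cont_choice m g eps : (forall x, cont_at m g x) -> eps > 0 ->
  { dl : (nat -> R) -> R | forall p, dl p > 0 /\ forall y, (forall i, (i <= m)%nat -> Rabs (y i - p i) < dl p) ->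
      Rabs (g y - g p) < eps }.
Proof.
  intros Hc He.
  exists (fun p => proj1_sig (constructive_indefinite_description _ (Hc p eps He))).
  intro p. destruct (constructive_indefinite_description _ (Hc p eps He)) as [d Hd]. exact Hd.
Qed.

Lemma UC_of_cont m g Rad : (forall x, cont_at m g x) -> zero_out m Rad g -> UCm m g.
Proof.
  intros Hc Hz e He.
  destruct (cont_choice m g (e / 2) Hc ltac:(lra)) as [dl Hdl].
  set (n := S m). set (r := Rabs Rad + 1).
  assert (Hpos : forall t : Compactness.Tn n R, dl (fromT n t) / 2 > 0).
  { intro t. destruct (Hdl (fromT n t)) as [H _]. lra. }
  set (delta := fun t : Compactness.Tn n R => mkposreal _ (Hpos t)).
  destruct (compactness_value n (toT n (fun _ => - r)) (toT n (fun _ => r)) delta) as [d Hd].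
  exists (Rmin d 1). split. { apply Rmin_pos; [apply cond_pos | lra]. }
  intros x y Hxy.
  destruct (classic (forall i, (i <= m)%nat -> - r <= x i <= r)) as [Hin|Hout].
  - assert (Hb : bounded_n n (toT n (fun _ => - r)) (toT n (fun _ => r)) (toT n x)).
    { apply bounded_toT. intros i Hi. apply Hin. unfold n in Hi; lia. }
    specialize (Hd _ Hb). apply NNPP. intro Hn. apply Hd. intros [t [_ [Hcl Hdt]]].
    apply Hn.
    set (p := fromT n t) in *.
    assert (Edt : pos (delta t) = dl p / 2) by reflexivity. rewrite Edt in Hdt.
    destruct (Hdl p) as [Hp1 Hp2].
    assert (Hx : Rabs (g x - g p) < e / 2).
    { apply Hp2. intros i Hi. pose proof (close_toT n _ x t Hcl i ltac:(unfold n; lia)). rewrite Edt in H. fold p in H. lra. }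
    assert (Hy : Rabs (g y - g p) < e / 2).
    { apply Hp2. intros i Hi. pose proof (close_toT n _ x t Hcl i ltac:(unfold n; lia)). rewrite Edt in H. fold p in H.
      specialize (Hxy i Hi). pose proof (Rmin_l d 1).
      replace (y i - p i) with ((x i - p i) - (x i - y i)) by ring.
      eapply Rle_lt_trans. apply Rabs_triang. rewrite Rabs_Ropp. lra. }
    replace (g x - g y) with ((g x - g p) - (g y - g p)) by ring.
    eapply Rle_lt_trans. apply Rabs_triang. rewrite Rabs_Ropp. lra.
  - apply not_all_ex_not in Hout. destruct Hout as [i Hi].
    apply imply_to_and in Hi. destruct Hi as [Hi Hnot].
    assert (Hxi : Rabs (x i) > r).
    { destruct (Rle_dec (Rabs (x i)) r) as [Hl|Hl]; [|lra]. exfalso; apply Hnot.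
      apply Rabs_le_inv; auto. }
    specialize (Hxy i Hi). pose proof (Rmin_r d 1).
    assert (Hyi : Rabs (y i) > Rad).
    { replace (y i) with (x i - (x i - y i)) by ring.
      pose proof (Rabs_triang_inv (x i) (x i - y i)). pose proof (Rle_abs Rad). unfold r in Hxi. lra. }
    rewrite (Hz x), (Hz y). rewrite Rminus_diag, Rabs_R0; auto.
    exists i; split; auto. exists i; split; auto. pose proof (Rle_abs Rad). unfold r in Hxi; lra.
Qed.


Lemma Bnd_of_cont m g Rad : (forall x, cont_at m g x) -> zero_out m Rad g -> Bnd g.
Proof.
  intros Hc Hz.
  destruct (cont_choice m g 1 Hc ltac:(lra)) as [dl Hdl].
  set (n := S m). set (r := Rabs Rad + 1).
  assert (Hpos : forall t : Compactness.Tn n R, dl (fromT n t) > 0).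
  { intro t. destruct (Hdl (fromT n t)) as [H _]. lra. }
  set (delta := fun t : Compactness.Tn n R => mkposreal _ (Hpos t)).
  pose proof (compactness_list n (toT n (fun _ => - r)) (toT n (fun _ => r)) delta) as Hl.
  apply NNPP. intro Hn. apply Hl. intros [l Hl2]. apply Hn.
  set (M := fold_right (fun t acc => Rmax (Rabs (g (fromT n t))) acc) 0 l).
  assert (HM : forall t, In t l -> Rabs (g (fromT n t)) <= M).
  { unfold M; clear. induction l as [|a l IH]; simpl; intros t Ht; [contradiction|].
    destruct Ht as [->|Ht]. apply Rmax_l. eapply Rle_trans; [apply IH; auto| apply Rmax_r]. }
  exists (M + 1). intro x.
  destruct (classic (forall i, (i <= m)%nat -> - r <= x i <= r)) as [Hin|Hout].
  - assert (Hb : bounded_n n (toT n (fun _ => - r)) (toT n (fun _ => r)) (toT n x)).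
    { apply bounded_toT. intros i Hi. apply Hin. unfold n in Hi; lia. }
    destruct (Hl2 _ Hb) as [t [Ht [_ Hcl]]].
    destruct (Hdl (fromT n t)) as [_ Hp].
    assert (Hx : Rabs (g x - g (fromT n t)) < 1).
    { apply Hp. intros i Hi. exact (close_toT n _ x t Hcl i ltac:(unfold n; lia)). }
    specialize (HM t Ht).
    pose proof (Rabs_triang_inv (g x) (g (fromT n t))). lra.
  - apply not_all_ex_not in Hout. destruct Hout as [i Hi].
    apply imply_to_and in Hi. destruct Hi as [Hi Hnot].
    rewrite (Hz x). rewrite Rabs_R0.
    assert (0 <= M).
    { unfold M. clear. induction l; simpl. lra. eapply Rle_trans; [exact IHl| apply Rmax_r]. }
    lra.
    exists i; split; auto.
    destruct (Rle_dec (Rabs (x i)) r) as [Hl3|Hl3]. exfalso; apply Hnot. apply Rabs_le_inv; auto.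
    pose proof (Rle_abs Rad). unfold r in Hl3; lra.
Qed.

Lemma Good_of_cont m g Rad : (forall x, cont_at m g x) -> zero_out m Rad g -> Good m g.
Proof. intros; split; [eapply Bnd_of_cont | eapply UC_of_cont]; eauto. Qed.

Lemma mvt_any (f f' : R -> R) a b : (forall c, derivable_pt_lim f c (f' c)) ->
  exists c, f b - f a = f' c * (b - a) /\ Rabs (c - a) <= Rabs (b - a).
Proof.
  intros Hd. destruct (Rtotal_order a b) as [Hab|[Hab|Hab]].
  - destruct (MVT_cor2 f f' a b Hab (fun c _ => Hd c)) as [c [E Hc]].
    exists c; split; auto. rewrite !Rabs_right by lra. lra.
  - subst. exists b. split. ring. rewrite Rminus_diag, Rabs_R0; lra.
  - destruct (MVT_cor2 f f' b a Hab (fun c _ => Hd c)) as [c [E Hc]].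
    exists c; split. lra. rewrite !Rabs_left by lra. lra.
Qed.

Lemma partial_spec m phi i x : C1 m phi -> (i <= m)%nat ->
  derivable_pt_lim (fun t => phi (upd x i t)) (x i) (partial phi i x).
Proof. intros [_ [H _]] Hi. apply H; auto. Qed.

Lemma partial_spec_at m phi i x c : C1 m phi -> (i <= m)%nat ->
  derivable_pt_lim (fun t => phi (upd x i t)) c (partial phi i (upd x i c)).
Proof.
  intros H Hi. pose proof (partial_spec m phi i (upd x i c) H Hi) as P.
  rewrite upd_eq in P. replace (fun t => phi (upd x i t)) with (fun t => phi (upd (upd x i c) i t)); auto.
  apply functional_extensionality; intro t; rewrite upd_upd; auto.
Qed.

Lemma mvt_bound m phi j B : C1 m phi -> (j <= m)%nat -> (forall x, Rabs (partial phi j x) <= B) ->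
  forall x c, Rabs (phi (upd x j c) - phi x) <= B * Rabs (c - x j).
Proof.
  intros H Hj HB x c.
  destruct (mvt_any (fun t => phi (upd x j t)) (fun t => partial phi j (upd x j t)) (x j) c) as [z [E _]].
  { intro z. apply (partial_spec_at m); auto. }
  rewrite upd_same in E. rewrite E, Rabs_mult. apply Rmult_le_compat_r; auto using Rabs_pos.
Qed.

Lemma partial_zero m phi Rad j : C1 m phi -> (j <= m)%nat -> zero_out m Rad phi -> zero_out m Rad (partial phi j).
Proof.
  intros H Hj Hz x [i [Hi Hxi]].
  apply (uniqueness_limite (fun t => phi (upd x j t)) (x j)); [apply (partial_spec m); auto|].
  intros e He. assert (Hd : Rabs (x i) - Rad > 0) by lra.
  exists (mkposreal _ Hd). intros h Hh Hhd. simpl in Hhd.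
  rewrite (Hz (upd x j (x j + h))), (Hz (upd x j (x j))).
  - rewrite Rminus_diag. unfold Rdiv. rewrite Rmult_0_l, Rminus_0_r, Rabs_R0; lra.
  - exists i; split; auto. rewrite upd_same; auto.
  - exists i; split; auto. destruct (Nat.eq_dec i j) as [->|Hne].
    + rewrite upd_eq. pose proof (Rabs_triang_inv (x j) (- h)) as H0. rewrite Rabs_Ropp in H0. replace (x j - - h) with (x j + h) in H0 by ring. lra.
    + rewrite upd_neq; auto.
Qed.

Lemma UD_phi m phi j : C1 m phi -> (j <= m)%nat -> UCm m (partial phi j) -> UD j phi (partial phi j).
Proof.
  intros H Hj HU e He. destruct (HU (e / 2)) as [d [Hd Hc]]; [lra|].
  exists d; split; auto. intros x h Hh Hhd.
  destruct (mvt_any (fun t => phi (upd x j t)) (fun t => partial phi j (upd x j t)) (x j) (x j + h)) as [z [E Hz]].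
  { intro z. apply (partial_spec_at m); auto. }
  rewrite upd_same in E. rewrite E. replace (x j + h - x j) with h by ring.
  replace (partial phi j (upd x j z) * h / h - partial phi j x) with (partial phi j (upd x j z) - partial phi j x)
    by (field; auto).
  left. apply Rlt_le_trans with (e / 2); [|lra]. apply Hc. intros i Hi. unfold upd.
  destruct (Nat.eqb_spec i j). subst. replace (x j + h - x j) with h in Hz by ring. lra.
  rewrite Rminus_diag, Rabs_R0; lra.
Qed.

Lemma bnd_family (f : nat -> (nat -> R) -> R) m : (forall j, (j <= m)%nat -> Bnd (f j)) ->
  exists B, forall j, (j <= m)%nat -> forall x, Rabs (f j x) <= B.
Proof.
  induction m as [|m IH]; intros H.
  - destruct (H 0%nat (le_n 0)) as [B HB]. exists B. intros j Hj x. replace j with 0%nat by lia. auto.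
  - destruct IH as [B1 HB1]. intros; apply H; lia.
    destruct (H (S m) (le_n _)) as [B2 HB2]. exists (Rmax B1 B2). intros j Hj x.
    destruct (Nat.eq_dec j (S m)) as [->|Hne].
    + eapply Rle_trans; [apply HB2| apply Rmax_r].
    + eapply Rle_trans; [apply HB1; lia| apply Rmax_l].
Qed.

Definition mix (k : nat) x y : nat -> R := fun i => if Nat.ltb i k then y i else x i.

Lemma mix_S k x y : mix (S k) x y = upd (mix k x y) k (y k).
Proof. apply functional_extensionality; intro i. unfold mix, upd.
  destruct (Nat.ltb_spec i (S k)); destruct (Nat.ltb_spec i k); destruct (Nat.eqb_spec i k); subst; auto; lia. Qed.

Lemma Good_phi m phi Rad : C1 m phi -> zero_out m Rad phi ->
  (forall j, (j <= m)%nat -> Good m (partial phi j)) -> Good m phi.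
Proof.
  intros H Hz HG.
  destruct (bnd_family (fun j => partial phi j) m (fun j Hj => proj1 (HG j Hj))) as [B HB].
  assert (HB0 : 0 <= B). { specialize (HB 0%nat (Nat.le_0_l _) (fun _ => 0)). pose proof (Rabs_pos (partial phi 0 (fun _ => 0))). lra. }
  assert (Hpath : forall d x y, closeR m d x y -> forall k, (k <= S m)%nat ->
     Rabs (phi (mix k x y) - phi x) <= INR k * (B * d)).
  { intros d x y Hxy k. induction k as [|k IH]; intros Hk.
    - replace (mix 0 x y) with x. rewrite Rminus_diag, Rabs_R0; simpl; lra.
      apply functional_extensionality; intro i; reflexivity.
    - rewrite mix_S. rewrite S_INR.
      replace (phi (upd (mix k x y) k (y k)) - phi x) with
        ((phi (upd (mix k x y) k (y k)) - phi (mix k x y)) + (phi (mix k x y) - phi x)) by ring.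
      eapply Rle_trans; [apply Rabs_triang|].
      assert (Rabs (phi (upd (mix k x y) k (y k)) - phi (mix k x y)) <= B * d).
      { eapply Rle_trans. apply (mvt_bound m phi k B H); [lia| intros; apply HB; lia].
        apply Rmult_le_compat_l; auto. unfold mix. rewrite (proj2 (Nat.ltb_ge k k)) by lia.
        left. rewrite <- Rabs_Ropp. replace (- (y k - x k)) with (x k - y k) by ring. apply Hxy. lia. }
      specialize (IH ltac:(lia)). lra. }
  assert (Hend : forall x y, phi (mix (S m) x y) = phi y).
  { intros x y. destruct H as [Hdep _]. apply Hdep. intros i Hi. unfold mix.
    rewrite (proj2 (Nat.ltb_lt i (S m))) by lia. reflexivity. }
  split.
  - exists (INR (S m) * (B * (2 * Rabs Rad + 1))). intro x.
    destruct (classic (exists i, (i <= m)%nat /\ Rabs (x i) > Rad)) as [Hout|Hin].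
    + rewrite Hz by auto. rewrite Rabs_R0. apply Rmult_le_pos; [apply pos_INR|].
      apply Rmult_le_pos; auto. pose proof (Rabs_pos Rad); lra.
    + set (y := upd x 0 (Rabs Rad + 1)).
      assert (Hy : phi y = 0). { apply Hz. exists 0%nat; split; [lia|]. unfold y; rewrite upd_eq.
        rewrite Rabs_right; pose proof (Rabs_pos Rad); pose proof (Rle_abs Rad); lra. }
      assert (E : Rabs (phi y - phi x) <= B * Rabs (Rabs Rad + 1 - x 0%nat)).
      { unfold y. apply (mvt_bound m phi 0 B H); [lia| intros; apply HB; lia]. }
      assert (Rabs (Rabs Rad + 1 - x 0%nat) <= 2 * Rabs Rad + 1).
      { assert (Rabs (x 0%nat) <= Rad) by (destruct (Rle_dec (Rabs (x 0%nat)) Rad); auto; exfalso; apply Hin; exists 0%nat; split; [lia|lra]).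
        apply Rabs_le. apply Rabs_le_inv in H0. pose proof (Rle_abs Rad). pose proof (Rabs_pos Rad). lra. }
      rewrite Hy in E. rewrite Rminus_0_l, Rabs_Ropp in E.
      assert (1 <= INR (S m)) by (rewrite S_INR; pose proof (pos_INR m); lra).
      assert (B * Rabs (Rabs Rad + 1 - x 0%nat) <= B * (2 * Rabs Rad + 1)) by (apply Rmult_le_compat_l; auto).
      assert (0 <= B * (2 * Rabs Rad + 1)) by (apply Rmult_le_pos; auto; pose proof (Rabs_pos Rad); lra).
      nra.
  - intros e He. set (c := INR (S m) * (B + 1)).
    assert (Hc : c > 0). { unfold c. apply Rmult_lt_0_compat; [apply lt_0_INR; lia| lra]. }
    exists (e / (2 * c)). split. apply Rdiv_lt_0_compat; lra.
    intros x y Hxy. specialize (Hpath _ x y Hxy (S m) (le_n _)). rewrite Hend in Hpath.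
    rewrite <- Rabs_Ropp. replace (- (phi x - phi y)) with (phi y - phi x) by ring.
    eapply Rle_lt_trans; [exact Hpath|].
    assert (INR (S m) * (B * (e / (2 * c))) <= c * (e / (2 * c))).
    { assert (Hq : 0 < e / (2 * c)) by (apply Rdiv_lt_0_compat; lra).
      set (q := e / (2 * c)) in *. unfold c. rewrite <- Rmult_assoc. apply Rmult_le_compat_r. lra.
      apply Rmult_le_compat_l; [apply pos_INR| lra]. }
    assert (c * (e / (2 * c)) = e / 2) by (field; lra). lra.
Qed.


Lemma exp_le' a b : a <= b -> exp a <= exp b.
Proof. intros [H|H]; [left; apply exp_increasing; auto| subst; lra]. Qed.

Definition qw (b s : R) : R := rpow (Rabs s) b.

Lemma qw_pos b s : s <> 0 -> qw b s = exp (b * ln (Rabs s)).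
Proof. intros Hs. unfold qw, rpow. destruct (Req_EM_T (Rabs s) 0) as [E|E].
  - exfalso. apply Hs. destruct (Rcase_abs s); [rewrite Rabs_left in E| rewrite Rabs_right in E]; lra.
  - reflexivity. Qed.

Lemma qw_nonneg b s : 0 <= qw b s.
Proof. destruct (Req_EM_T s 0) as [->|Hs].
  - unfold qw, rpow. rewrite Rabs_R0. destruct (Req_EM_T 0 0); [|lra]. destruct (Req_EM_T b 0); lra.
  - rewrite qw_pos by auto. left; apply exp_pos. Qed.

Lemma abs_pos_ne s : s <> 0 -> 0 < Rabs s.
Proof. intros; apply Rabs_pos_lt; auto. Qed.

Lemma qw_cont b : 0 <= b -> contR (qw b).
Proof.
  intros Hb. destruct (Req_EM_T b 0) as [->|Hb0].
  - apply contR_ext with (fun _ => 1); [apply contR_const|]. intro s.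
    destruct (Req_EM_T s 0) as [->|Hs].
    + unfold qw, rpow. rewrite Rabs_R0. destruct (Req_EM_T 0 0); [|lra]. destruct (Req_EM_T 0 0); lra.
    + rewrite qw_pos by auto. rewrite Rmult_0_l, exp_0. reflexivity.
  - intro s0. destruct (Req_EM_T s0 0) as [->|Hs0].
    + apply cont_ed. intros e He. exists (exp (ln e / b)). split; [apply exp_pos|].
      intros y Hy. rewrite Rminus_0_r in Hy.
      assert (Hq0 : qw b 0 = 0).
      { unfold qw, rpow. rewrite Rabs_R0. destruct (Req_EM_T 0 0); [|lra]. destruct (Req_EM_T b 0); [lra|auto]. }
      rewrite Hq0, Rminus_0_r. destruct (Req_EM_T y 0) as [->|Hy0].
      * rewrite Hq0, Rabs_R0. lra.
      * rewrite qw_pos by auto. rewrite Rabs_right by (left; apply exp_pos).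
        rewrite <- (exp_ln e) by lra. apply exp_increasing.
        assert (ln (Rabs y) < ln e / b).
        { rewrite <- (ln_exp (ln e / b)). apply ln_increasing; auto. apply abs_pos_ne; auto. }
        apply Rmult_lt_compat_l with (r := b) in H; [|lra].
        replace (b * (ln e / b)) with (ln e) in H by (field; lra). lra.
    + apply (continuous_ext_loc (qw b) (fun s => exp (b * ln (Rabs s)))).
      * assert (Hp : 0 < Rabs s0) by (apply abs_pos_ne; auto).
        exists (mkposreal _ Hp). intros y Hy. change (Rabs (y - s0) < Rabs s0) in Hy.
        rewrite qw_pos; auto. intro E; subst. rewrite Rminus_0_l, Rabs_Ropp in Hy. lra.
      * apply continuity_pt_filterlim.
        apply continuity_pt_comp with (f1 := fun s => b * ln (Rabs s)) (f2 := exp).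
        -- apply continuity_pt_comp with (f1 := Rabs) (f2 := fun a => b * ln a).
           ++ apply Rcontinuity_abs.
           ++ apply continuity_pt_scal. apply derivable_continuous_pt.
              exists (/ Rabs s0). apply derivable_pt_lim_ln. apply abs_pos_ne; auto.
        -- apply derivable_continuous_pt. exists (exp (b * ln (Rabs s0))). apply derivable_pt_lim_exp.
Qed.

Lemma qw_sq_le d1 s : 1/2 <= d1 < 1 -> 0 <= s <= 1 -> s ^ 2 <= qw (2 * d1) s.
Proof.
  intros Hd Hs. destruct (Req_EM_T s 0) as [->|Hs0].
  - simpl. rewrite Rmult_0_l. apply qw_nonneg.
  - rewrite qw_pos by auto. rewrite Rabs_right by lra.
    replace (s ^ 2) with (exp (2 * ln s)).
    + apply exp_le'. assert (ln s <= 0). { rewrite <- ln_1. apply ln_le; lra. }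
      nra.
    + replace 2 with (INR 2) at 1 by (simpl; ring). rewrite <- (Rpower_pow 2 s) by lra. reflexivity.
Qed.

Lemma qw_lower d2 s : 0 <= d2 -> 1/2 <= s <= 1 -> exp (2 * d2 * ln (1/2)) <= qw (2 * d2) s.
Proof.
  intros Hd Hs. rewrite qw_pos by lra. rewrite Rabs_right by lra. apply exp_le'.
  apply Rmult_le_compat_l; [lra|]. apply ln_le; lra.
Qed.

Lemma pow2_qw b b' s : 0 <= s <= 1 -> pow2 (Rabs s) b b' = qw b s.
Proof. intros Hs. unfold pow2, qw. rewrite Rabs_right by lra. destruct (Rle_dec s 1); [auto|lra]. Qed.


Lemma UD_lin j F F' G G' a b : UD j F F' -> UD j G G' ->
  UD j (fun y => a * F y + b * G y) (fun y => a * F' y + b * G' y).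
Proof.
  intros HF HG e He. set (e' := e / (Rabs a + Rabs b + 1)).
  assert (He' : e' > 0) by (unfold e'; apply Rdiv_lt_0_compat; [lra|]; pose proof (Rabs_pos a); pose proof (Rabs_pos b); lra).
  destruct (HF e' He') as [d1 [Hd1 H1]]. destruct (HG e' He') as [d2 [Hd2 H2]].
  exists (Rmin d1 d2). split; [apply Rmin_pos; auto|]. intros x h Hh Hhd.
  specialize (H1 x h Hh ltac:(pose proof (Rmin_l d1 d2); lra)).
  specialize (H2 x h Hh ltac:(pose proof (Rmin_r d1 d2); lra)).
  replace ((a * F (upd x j (x j + h)) + b * G (upd x j (x j + h)) - (a * F x + b * G x)) / h - (a * F' x + b * G' x))
    with (a * ((F (upd x j (x j + h)) - F x) / h - F' x) + b * ((G (upd x j (x j + h)) - G x) / h - G' x)) by (field; auto).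
  eapply Rle_trans; [apply Rabs_triang|]. rewrite !Rabs_mult.
  assert (Rabs a * Rabs ((F (upd x j (x j + h)) - F x) / h - F' x) <= Rabs a * e') by (apply Rmult_le_compat_l; auto using Rabs_pos).
  assert (Rabs b * Rabs ((G (upd x j (x j + h)) - G x) / h - G' x) <= Rabs b * e') by (apply Rmult_le_compat_l; auto using Rabs_pos).
  assert ((Rabs a + Rabs b) * e' <= e).
  { unfold e'. pose proof (Rabs_pos a); pose proof (Rabs_pos b).
    apply Rmult_le_reg_r with (Rabs a + Rabs b + 1); [lra|]. field_simplify; [|lra]. nra. }
  nra.
Qed.

Lemma UD_const_dir j F : (forall y t, F (upd y j t) = F y) -> UD j F (fun _ => 0).
Proof. intros HF e He. exists 1. split; [lra|]. intros x h Hh _. rewrite HF.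
  replace ((F x - F x) / h - 0) with 0 by (field; auto). rewrite Rabs_R0; lra. Qed.

Lemma UD_mult m j F F' G G' : Good m F -> Good m G -> Good m G' -> UD j F F' -> UD j G G' ->
  UD j (fun y => F y * G y) (fun y => F' y * G y + F y * G' y).
Proof.
  intros [[BF HBF] HUF] [[BG HBG] _] [[BG' HBG'] _] HF HG e He.
  pose proof (Bnd_pos _ _ HBF) as P1. pose proof (Bnd_pos _ _ HBG) as P2. pose proof (Bnd_pos _ _ HBG') as P3.
  set (e' := e / (BF + BG + BG' + 1)).
  assert (He' : e' > 0) by (unfold e'; apply Rdiv_lt_0_compat; lra).
  destruct (HF e' He') as [d1 [Hd1 H1]]. destruct (HG e' He') as [d2 [Hd2 H2]].
  destruct (HUF e' He') as [d3 [Hd3 H3]].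
  exists (Rmin d1 (Rmin d2 d3)). split; [repeat apply Rmin_pos; auto|]. intros x h Hh Hhd.
  pose proof (Rmin_l d1 (Rmin d2 d3)) as M1. pose proof (Rmin_r d1 (Rmin d2 d3)) as M2. pose proof (Rmin_l d2 d3) as M3. pose proof (Rmin_r d2 d3) as M4.
  specialize (H1 x h Hh ltac:(lra)). specialize (H2 x h Hh ltac:(lra)).
  assert (H3' : Rabs (F (upd x j (x j + h)) - F x) < e').
  { apply H3. intros i Hi. unfold upd. destruct (Nat.eqb_spec i j).
    - subst. replace (x j + h - x j) with h by ring. lra.
    - rewrite Rminus_diag, Rabs_R0; lra. }
  set (F1 := F (upd x j (x j + h))) in *. set (G1 := G (upd x j (x j + h))) in *.
  replace ((F1 * G1 - F x * G x) / h - (F' x * G x + F x * G' x)) with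
    (F1 * ((G1 - G x) / h - G' x) + (F1 - F x) * G' x + G x * ((F1 - F x) / h - F' x)) by (field; auto).
  eapply Rle_trans; [apply Rabs_triang|]. eapply Rle_trans; [apply Rplus_le_compat_r; apply Rabs_triang|].
  rewrite !Rabs_mult.
  assert (Rabs F1 * Rabs ((G1 - G x) / h - G' x) <= BF * e') by (apply Rmult_le_compat; auto using Rabs_pos; apply HBF).
  assert (Rabs (F1 - F x) * Rabs (G' x) <= e' * BG') by (apply Rmult_le_compat; auto using Rabs_pos; lra).
  assert (Rabs (G x) * Rabs ((F1 - F x) / h - F' x) <= BG * e') by (apply Rmult_le_compat; auto using Rabs_pos).
  assert ((BF + BG + BG') * e' <= e).
  { unfold e'. apply Rmult_le_reg_r with (BF + BG + BG' + 1); [lra|]. field_simplify; [|lra]. nra. }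
  nra.
Qed.

Lemma phi_facts m phi : C1c m phi ->
  Good m phi /\ (forall j, (j <= m)%nat -> Good m (partial phi j)) /\ (forall j, (j <= m)%nat -> UD j phi (partial phi j)).
Proof.
  intros [HC [Rad Hz]].
  assert (Hz' : zero_out m Rad phi) by exact Hz.
  assert (HG : forall j, (j <= m)%nat -> Good m (partial phi j)).
  { intros j Hj. apply (Good_of_cont m _ Rad). intro x. destruct HC as [_ [_ Hc]]. apply Hc; auto.
    apply (partial_zero m); auto. }
  split; [eapply Good_phi; eauto|]. split; auto.
  intros j Hj. apply (UD_phi m); auto. apply (HG j Hj).
Qed.

Lemma contR_cube m k G x j : Good m G -> contR (fun t => cube_int k G (upd x j t)).
Proof. intros; apply (Good_cont m); apply Good_cube; auto. Qed.

Lemma Good_sum m k (fd : nat -> (nat -> R) -> R) : (forall i, (1 <= i <= k)%nat -> Good m (fd i)) ->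
  Good m (fun y => sum_1_to k (fun i => fd i y ^ 2)).
Proof.
  induction k as [|k IH]; intros H; simpl.
  - apply Good_const.
  - apply Good_plus. apply IH; intros; apply H; lia. apply Good_sq, H; lia.
Qed.

Lemma sum_nonneg k (g : nat -> R) : 0 <= sum_1_to k (fun i => g i ^ 2).
Proof. induction k; cbn [sum_1_to]. lra. pose proof (pow2_ge_0 (g (S k))). lra. Qed.


Lemma Good_P m k f : Good m f -> Good m (fun y => cube_int k f y / 2 ^ k).
Proof. intros Hf. apply Good_ext with (fun y => / 2 ^ k * cube_int k f y).
  apply Good_scal, Good_cube; auto. intros; unfold Rdiv; ring. Qed.

Lemma two_pow_pos k : 0 < 2 ^ k.
Proof. apply pow_lt; lra. Qed.

Lemma Poinc_cube m f (fd : nat -> (nat -> R) -> R) : Good m f ->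
  (forall i, (1 <= i <= m)%nat -> Good m (fd i) /\ UD i f (fd i)) ->
  forall k, (k <= m)%nat -> forall x,
  cube_int k (fun y => (f y - cube_int k f y / 2 ^ k) ^ 2) x
    <= 32 * 2 ^ k * cube_int k (fun y => sum_1_to k (fun i => fd i y ^ 2)) x.
Proof.
  intros Hf Hfd k. induction k as [|k IH]; intros Hk x.
  - simpl. replace (f x / 1) with (f x) by field. lra.
  - specialize (IH ltac:(lia)).
    assert (Hfd' : Good m (fd (S k))) by (apply Hfd; lia).
    assert (HUD : UD (S k) f (fd (S k))) by (apply Hfd; lia).
    set (P0 := fun y => cube_int k f y / 2 ^ k).
    set (P1 := fun y => cube_int (S k) f y / 2 ^ S k).
    assert (GP0 : Good m P0) by (apply Good_P; auto).
    assert (GP1 : Good m P1) by (apply Good_P; auto).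
    set (A := fun y => (f y - P0 y) ^ 2).
    set (N := fun y => (P0 y - P1 y) ^ 2).
    set (Q := fun y => (f y - P1 y) ^ 2).
    assert (GA : Good m A) by (apply Good_sq, Good_minus; auto).
    assert (GN : Good m N) by (apply Good_sq, Good_minus; auto).
    assert (GQ : Good m Q) by (apply Good_sq, Good_minus; auto).
    set (Sk := fun y => sum_1_to k (fun i => fd i y ^ 2)).
    assert (GS : Good m Sk) by (apply Good_sum; intros; apply Hfd; lia).
    set (D := fun y => fd (S k) y ^ 2).
    assert (GD : Good m D) by (apply Good_sq; auto).
    set (z := fun t => upd x (S k) t).
    set (g := fun t => cube_int k f (z t) / 2 ^ k).
    set (g' := fun t => cube_int k (fd (S k)) (z t) / 2 ^ k).
    change (cube_int (S k) Q x <= 32 * 2 ^ S k * cube_int (S k) (fun y => sum_1_to (S k) (fun i => fd i y ^ 2)) x).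
    rewrite (cube_S_RI m) by (apply Good_cube; auto).
    assert (Hpt : forall t, cube_int k Q (z t) <= (64 * 2 ^ k) * cube_int k Sk (z t) + 2 ^ S k * (g t - RI g (-1) 1 / 2) ^ 2).
    { intro t.
      assert (E1 : cube_int k Q (z t) <= cube_int k (fun y => 2 * A y + 2 * N y) (z t)).
      { apply (Cube_mono m); auto. apply Good_lin; auto. intro y. unfold Q, A, N.
        pose proof (pow2_ge_0 (f y - P0 y - (P0 y - P1 y))). nra. }
      rewrite (Cube_lin m) in E1 by auto.
      assert (E2 : cube_int k N (z t) = 2 ^ k * N (z t)).
      { apply (Cube_N m). intros y i s Hi. unfold N, P0, P1.
        rewrite (Cube_over k f i), (Cube_over (S k) f i) by lia. reflexivity. }
      assert (E3 : P1 (z t) = RI g (-1) 1 / 2).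
      { unfold P1, z. rewrite (Cube_over (S k) f (S k)) by lia.
        rewrite (cube_S_RI m) by (apply Good_cube; auto).
        assert (Ef : forall s, cube_int k f (upd x (S k) s) = 2 ^ k * g s + 0 * g s).
        { intro s. unfold g, z. field. apply pow_nonzero; lra. }
        rewrite (RI_ext _ _ (-1) 1 Ef).
        rewrite RI_lin by (apply ex_RI; [lra|]; unfold g; apply contR_ext with (fun t => / 2 ^ k * cube_int k f (z t));
             [apply contR_mult; [apply contR_const| apply (contR_cube m); auto]| intros; unfold Rdiv; ring]).
        change (2 ^ S k) with (2 * 2 ^ k). field. apply pow_nonzero; lra. }
      assert (E4 : N (z t) = (g t - RI g (-1) 1 / 2) ^ 2) by (unfold N; rewrite E3; reflexivity).
      specialize (IH (z t)). fold A Sk in IH. fold P0 in IH.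
      change (cube_int k (fun y => (f y - cube_int k f y / 2 ^ k) ^ 2) (z t)) with (cube_int k A (z t)) in IH.
      rewrite E2, E4 in E1. change (2 ^ S k) with (2 * 2 ^ k). lra. }
    assert (Hg : contR g).
    { unfold g. apply contR_ext with (fun t => / 2 ^ k * cube_int k f (z t));
        [apply contR_mult; [apply contR_const| apply (contR_cube m); auto]| intros; unfold Rdiv; ring]. }
    assert (Hg' : contR g').
    { unfold g'. apply contR_ext with (fun t => / 2 ^ k * cube_int k (fd (S k)) (z t));
        [apply contR_mult; [apply contR_const| apply (contR_cube m); auto]| intros; unfold Rdiv; ring]. }
    assert (Hder : forall t, is_derive g t (g' t)).
    { intro t. assert (U := Cube_UD m k f (fd (S k)) (S k) Hf Hfd' HUD ltac:(lia)).
      pose proof (UD_deriv _ _ _ U x t) as D1.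
      unfold g, g', z. eapply isd_ext.
      - apply (isd_mult (fun s => cube_int k f (upd x (S k) s)) (fun _ => / 2 ^ k)); [exact D1| apply isd_const].
      - field. apply pow_nonzero; lra. }
    assert (HL1 := L1 g g' Hder Hg').
    assert (Hg'2 : forall t, g' t ^ 2 <= / 2 ^ k * cube_int k D (z t)).
    { intro t. unfold g'. pose proof (Cube_Jensen m k (fd (S k)) (z t) Hfd') as J.
      fold D in J. pose proof (two_pow_pos k).
      replace ((cube_int k (fd (S k)) (z t) / 2 ^ k) ^ 2) with ((cube_int k (fd (S k)) (z t)) ^ 2 / (2 ^ k * 2 ^ k))
        by (field; lra).
      apply Rmult_le_reg_r with (2 ^ k * 2 ^ k); [nra|].
      replace (cube_int k (fd (S k)) (z t) ^ 2 / (2 ^ k * 2 ^ k) * (2 ^ k * 2 ^ k)) with (cube_int k (fd (S k)) (z t) ^ 2) by (field; lra).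
      replace (/ 2 ^ k * cube_int k D (z t) * (2 ^ k * 2 ^ k)) with (2 ^ k * cube_int k D (z t)) by (field; lra).
      exact J. }
    assert (Hcz : forall G, Good m G -> contR (fun t => cube_int k G (z t))) by (intros; apply (contR_cube m); auto).
    assert (I1 : RI (fun t => cube_int k Q (z t)) (-1) 1 <=
                 RI (fun t => (64 * 2 ^ k) * cube_int k Sk (z t) + 2 ^ S k * (fun t => (g t - RI g (-1) 1 / 2) ^ 2) t) (-1) 1).
    { apply RI_le; try lra. apply ex_RI; [lra| auto].
      apply ex_RI_lin; apply ex_RI; try lra; auto. apply contR_sq, contR_minus; auto using contR_const.
      intros; apply Hpt. }
    rewrite RI_lin in I1 by (apply ex_RI; try lra; auto; apply contR_sq, contR_minus; auto using contR_const).
    assert (I2 : RI (fun t => g' t ^ 2) (-1) 1 <= RI (fun t => / 2 ^ k * cube_int k D (z t) + 0 * 0) (-1) 1).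
    { apply RI_le; try lra. apply ex_RI; [lra|]. apply contR_sq; auto.
      apply ex_RI; [lra|]. apply contR_plus; [apply contR_mult; [apply contR_const| auto]| apply contR_const].
      intros; rewrite Rmult_0_l, Rplus_0_r; apply Hg'2. }
    rewrite (RI_lin (fun t => cube_int k D (z t)) (fun _ => 0)) in I2 by (apply ex_RI; try lra; auto using contR_const).
    unfold z in I1, I2. rewrite <- (cube_S_RI m k Sk x) in I1 by (apply Good_cube; auto).
    rewrite <- (cube_S_RI m k D x) in I2 by (apply Good_cube; auto).
    assert (Esum : cube_int (S k) (fun y => sum_1_to (S k) (fun i => fd i y ^ 2)) x =
                   1 * cube_int (S k) Sk x + 1 * cube_int (S k) D x).
    { rewrite <- (Cube_lin m) by auto. f_equal. apply functional_extensionality; intro y.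
      unfold Sk, D. cbn [sum_1_to]. ring. }
    rewrite Esum.
    assert (N1 : 0 <= cube_int (S k) D x) by (apply (Cube_nonneg m); auto; intros; apply pow2_ge_0).
    assert (N2 : 0 <= cube_int (S k) Sk x) by (apply (Cube_nonneg m); auto; intros; apply sum_nonneg).
    pose proof (two_pow_pos k) as Pk.
    assert (Hc : 2 ^ S k * (16 * (/ 2 ^ k * cube_int (S k) D x)) = 32 * cube_int (S k) D x)
      by (change (2 ^ S k) with (2 * 2 ^ k); field; lra).
    rewrite RI_const in I2.
    assert (2 ^ S k * RI (fun t => (g t - RI g (-1) 1 / 2) ^ 2) (-1) 1 <= 32 * cube_int (S k) D x).
    { rewrite <- Hc. apply Rmult_le_compat_l; [left; apply two_pow_pos|]. lra. }
    assert (32 * cube_int (S k) D x <= 32 * 2 ^ S k * cube_int (S k) D x).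
    { change (2 ^ S k) with (2 * 2 ^ k). assert (1 <= 2 ^ k) by (apply pow_R1_Rle; lra). assert (0 <= (2 * 2 ^ k - 1) * cube_int (S k) D x) by (apply Rmult_le_pos; lra). lra. }
    change (2 ^ S k) with (2 * 2 ^ k) in *. lra.
Qed.


Ltac exri_base m := apply ex_RI; [lra| first [apply contR_const | apply (contR_cube m); assumption]].
Ltac exri m := first [solve [exri_base m] | solve [apply ex_RI_lin; exri_base m]].

Definition es (s : R) : nat -> R := upd (fun _ => 0) 0 s.

Lemma Cube_H2 m k H1 G1 H2 G2 x :
  (forall y i t, (1 <= i <= k)%nat -> H1 (upd y i t) = H1 y) ->
  (forall y i t, (1 <= i <= k)%nat -> H2 (upd y i t) = H2 y) -> Good m G1 -> Good m G2 ->
  cube_int k (fun y => H1 y * G1 y + H2 y * G2 y) x = H1 x * cube_int k G1 x + H2 x * cube_int k G2 x.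
Proof.
  intros HH1 HH2 HG1 HG2. revert x. induction k as [|k IHk]; intro x; [reflexivity|].
  rewrite cube_S.
  rewrite (fun_ext_R (fun t => cube_int k (fun y => H1 y * G1 y + H2 y * G2 y) (upd x (S k) t))
     (fun t => H1 x * cube_int k G1 (upd x (S k) t) + H2 x * cube_int k G2 (upd x (S k) t))).
  - rewrite Rint_RInt.
    + fold (RI (fun t => H1 x * cube_int k G1 (upd x (S k) t) + H2 x * cube_int k G2 (upd x (S k) t)) (-1) 1).
      rewrite RI_lin by (apply ex_RI; [lra|]; apply (Good_cont m); apply Good_cube; auto).
      rewrite !(cube_S_RI m) by (apply Good_cube; auto). ring.
    + apply ex_RI_lin; apply ex_RI; try lra; apply (Good_cont m); apply Good_cube; auto.
  - intro t. rewrite IHk. rewrite HH1, HH2 by lia. ring. intros; apply HH1; lia. intros; apply HH2; lia.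
Qed.

Lemma Rint_ext_RI (f g : R -> R) a b : a < b -> contR g -> (forall t, a <= t <= b -> f t = g t) ->
  Rint f a b = RI g a b.
Proof.
  intros Hab Hg E.
  assert (Hexg : ex_RInt g a b) by (apply ex_RI; [lra|auto]).
  assert (Hexf : ex_RInt f a b).
  { apply (ex_RInt_ext g). intros t Ht. rewrite Rmin_left in Ht by lra. rewrite Rmax_right in Ht by lra.
    symmetry; apply E; lra. auto. }
  rewrite Rint_RInt by auto. unfold RI. apply RInt_ext. intros t Ht.
  rewrite Rmin_left in Ht by lra. rewrite Rmax_right in Ht by lra. apply E; lra.
Qed.

Lemma box_RI m F : Good m F -> box_int m F = RI (fun s => cube_int m F (es s)) 0 1.
Proof. intros HF. unfold box_int. apply Rint_RInt. apply ex_RI; [lra|]. apply (contR_cube m); auto. Qed.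

Lemma cube_ext k F G x : (forall y, F y = G y) -> cube_int k F x = cube_int k G x.
Proof. intros E. f_equal. apply functional_extensionality; auto. Qed.

Lemma variance m phi c : Good m phi ->
  box_int m (fun x => (phi x - avg m phi) ^ 2) <= box_int m (fun x => (phi x - c) ^ 2).
Proof.
  intros Hp.
  assert (Hp2 : Good m (fun y => phi y ^ 2)) by (apply Good_sq; auto).
  assert (Hlin : forall c, Good m (fun y => 1 * phi y ^ 2 + (- 2 * c) * phi y)) by (intros; apply Good_lin; auto).
  assert (E : forall c, box_int m (fun x => (phi x - c) ^ 2) =
     RI (fun s => cube_int m (fun y => phi y ^ 2) (es s)) 0 1 - 2 * c * RI (fun s => cube_int m phi (es s)) 0 1 + 2 ^ m * c ^ 2).
  { intro c0. rewrite box_RI by (apply Good_sq, Good_minus; auto using Good_const).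
    rewrite (RI_ext _ (fun s => 1 * (fun s => 1 * cube_int m (fun y => phi y ^ 2) (es s) + (- 2 * c0) * cube_int m phi (es s)) s + (c0 ^ 2 * 2 ^ m) * (fun _ => 1) s)).
    - rewrite RI_lin by exri m. rewrite RI_lin by exri m. rewrite RI_const. ring.
    - intro s. rewrite (cube_ext m (fun y => (phi y - c0) ^ 2) (fun y => 1 * (fun y => 1 * phi y ^ 2 + (- 2 * c0) * phi y) y + (c0 ^ 2) * (fun _ => 1) y))
        by (intros; ring).
      rewrite (Cube_lin m) by (auto using Good_const). rewrite (Cube_lin m) by auto.
      rewrite (Cube_one m). ring. }
  rewrite !E. unfold avg. rewrite box_RI by auto.
  set (B1 := RI (fun s => cube_int m phi (es s)) 0 1).
  pose proof (two_pow_pos m).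
  assert (0 <= 2 ^ m * (c - B1 / 2 ^ m) ^ 2) by (apply Rmult_le_pos; [lra| apply pow2_ge_0]).
  assert (Eq : 2 ^ m * (c - B1 / 2 ^ m) ^ 2 = - 2 * c * B1 + 2 ^ m * c ^ 2 - (- 2 * (B1 / 2 ^ m) * B1 + 2 ^ m * (B1 / 2 ^ m) ^ 2))
    by (field; lra).
  lra.
Qed.


Lemma es_0 s : es s 0%nat = s.
Proof. unfold es. apply upd_eq. Qed.

Lemma cube_es m F s t : (forall y t, F (upd y 0 t) = F y) -> cube_int m F (es s) = cube_int m F (es t).
Proof. intros HF. unfold es. rewrite !(Cube_indep m F 0 HF) by lia. reflexivity. Qed.

Lemma key_estimate m d1 d2 phi : (1 <= m)%nat -> 1 / 2 <= d1 < 1 -> 0 <= d2 ->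
  Good m phi -> (forall j, (j <= m)%nat -> Good m (partial phi j)) ->
  (forall j, (j <= m)%nat -> UD j phi (partial phi j)) ->
  exists c,
  box_int m (fun x => (phi x - c) ^ 2) <=
    104 * RI (fun s => qw (2 * d1) s * cube_int m (fun y => partial phi 0 y ^ 2) (es s)) 0 1
    + (16 * (32 * 2 ^ m) / exp (2 * d2 * ln (1 / 2))) *
      RI (fun s => qw (2 * d2) s * cube_int m (fun y => sum_1_to m (fun i => partial phi i y ^ 2)) (es s)) 0 1.
Proof.
  intros Hm Hd1 Hd2 Gp Gd UDd.
  set (d0 := partial phi 0).
  assert (Gd0 : Good m d0) by (apply Gd; lia).
  set (a := fun y => phi (upd y 0 1)).
  assert (Ga : Good m a) by (apply Good_upd; auto).
  set (w := fun y => phi y - a y).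
  assert (Gw : Good m w) by (apply Good_minus; auto).
  assert (Gw2 : Good m (fun y => w y ^ 2)) by (apply Good_sq; auto).
  set (c := cube_int m phi (es 1) / 2 ^ m).
  exists c.
  set (C := 32 * 2 ^ m).
  set (kap := exp (2 * d2 * ln (1 / 2))).
  assert (Hkap : 0 < kap) by apply exp_pos.
  set (Sm := fun y => sum_1_to m (fun i => partial phi i y ^ 2)).
  assert (GS : Good m Sm) by (apply Good_sum; intros; apply Gd; lia).
  set (J1 := fun s => cube_int m (fun y => d0 y ^ 2) (es s)).
  set (J2 := fun s => cube_int m Sm (es s)).
  set (W := fun s => cube_int m (fun y => w y ^ 2) (es s)).
  assert (Gd02 : Good m (fun y => d0 y ^ 2)) by (apply Good_sq; auto).
  assert (cJ1 : contR J1) by (apply (contR_cube m); auto).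
  assert (cJ2 : contR J2) by (apply (contR_cube m); auto).
  assert (cW : contR W) by (apply (contR_cube m); auto).
  assert (W0 : forall s, 0 <= W s) by (intro; apply (Cube_nonneg m); auto; intros; apply pow2_ge_0).
  assert (J10 : forall s, 0 <= J1 s) by (intro; apply (Cube_nonneg m); auto; intros; apply pow2_ge_0).
  assert (J20 : forall s, 0 <= J2 s) by (intro; apply (Cube_nonneg m); auto; intros; apply sum_nonneg).
  set (w' := fun y => 1 * d0 y + (-1) * (fun _ => 0) y).
  assert (Gw' : Good m w') by (apply Good_lin; auto using Good_const).
  assert (UDw : UD 0 w w').
  { replace w with (fun y => 1 * phi y + (-1) * a y) by (apply functional_extensionality; intro; unfold w; ring).
    apply UD_lin. apply UDd; lia. apply UD_const_dir. intros y t. unfold a. rewrite upd_upd. reflexivity. }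
  set (Wf' := fun y => w' y * w y + w y * w' y).
  assert (GWf' : Good m Wf') by (apply Good_plus; apply Good_mult; auto).
  assert (UDww : UD 0 (fun y => w y * w y) Wf') by (apply (UD_mult m); auto).
  assert (Gww : Good m (fun y => w y * w y)) by (apply Good_mult; auto).
  set (W' := fun s => cube_int m Wf' (es s)).
  set (Z := fun s => s ^ 2 * J1 s).
  assert (Step1 : RI W 0 1 <= 4 * RI Z 0 1).
  { apply (L2 W W' Z).
    - intro s. assert (U := Cube_UD m m _ _ 0 Gww GWf' UDww ltac:(lia)).
      pose proof (UD_deriv _ _ _ U (fun _ => 0) s) as D.
      replace W with (fun s => cube_int m (fun y => w y * w y) (upd (fun _ => 0) 0 s)). exact D.
      apply functional_extensionality; intro t. unfold W, es. apply cube_ext. intros; ring.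
    - apply (contR_cube m); auto.
    - unfold Z. apply contR_mult; auto. apply contR_sq, contR_id.
    - unfold W. rewrite (Cube_freeze m _ 0 ltac:(lia)). rewrite es_0.
      rewrite (cube_ext m _ (fun _ => 0)).
      + rewrite (Cube_N m m (fun _ => 0)); [ring| auto].
      + intro y. unfold w, a. rewrite upd_upd. ring.
    - intros s Hs. unfold W, W', Z, J1.
      assert (E : W s / 2 + 2 * Z s + s * W' s =
        cube_int m (fun y => 1 * (fun y => / 2 * w y ^ 2 + (2 * s ^ 2) * d0 y ^ 2) y + s * Wf' y) (es s)).
      { rewrite (Cube_lin m) by (auto; apply Good_lin; auto). rewrite (Cube_lin m) by auto.
        unfold W, W', Z, J1. field. }
      assert (0 <= cube_int m (fun y => 1 * (fun y => / 2 * w y ^ 2 + (2 * s ^ 2) * d0 y ^ 2) y + s * Wf' y) (es s)).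
      { apply (Cube_nonneg m). apply Good_lin; auto. apply Good_lin; auto.
        intro y. unfold Wf', w'. pose proof (pow2_ge_0 (w y + 2 * s * d0 y)). nra. }
      unfold W, W', Z, J1 in E. lra. }
  set (Q := cube_int m (fun y => (a y - c) ^ 2) (es 1)).
  assert (GQf : Good m (fun y => (a y - c) ^ 2)) by (apply Good_sq, Good_minus; auto using Good_const).
  assert (Qs : forall s, Q = cube_int m (fun y => (a y - c) ^ 2) (es s)).
  { intro s. unfold Q. apply cube_es. intros y t. unfold a. rewrite upd_upd. reflexivity. }
  set (Pm := fun y => cube_int m phi y / 2 ^ m).
  assert (GPm : Good m Pm) by (apply Good_P; auto).
  assert (Step3 : forall s, Q <= 6 * W s + 4 * C * J2 s).
  { intro s. rewrite (Qs s).
    set (A := fun y => (phi y - Pm y) ^ 2). set (B := fun y => (Pm y - c) ^ 2).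
    assert (GA : Good m A) by (apply Good_sq, Good_minus; auto).
    assert (GB : Good m B) by (apply Good_sq, Good_minus; auto using Good_const).
    assert (M : cube_int m (fun y => (a y - c) ^ 2) (es s) <=
                cube_int m (fun y => 2 * w y ^ 2 + 1 * (fun y => 4 * A y + 4 * B y) y) (es s)).
    { apply (Cube_mono m); auto. apply Good_lin; auto. apply Good_lin; auto.
      intro y. unfold w, A, B.
      pose proof (pow2_ge_0 (phi y - a y + (phi y - Pm y + (Pm y - c)))).
      pose proof (pow2_ge_0 (phi y - Pm y - (Pm y - c))). nra. }
    rewrite (Cube_lin m) in M by (auto; apply Good_lin; auto). rewrite (Cube_lin m) in M by auto.
    assert (PA : cube_int m A (es s) <= C * J2 s).
    { apply (Poinc_cube m phi (fun i => partial phi i)); auto. intros i Hi; split; [apply Gd | apply UDd]; lia. }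
    assert (PB : cube_int m B (es s) = 2 ^ m * B (es s)).
    { apply (Cube_N m). intros y i t Hi. unfold B, Pm. rewrite (Cube_over m phi i) by lia. reflexivity. }
    assert (Ew : Pm (es s) - c = cube_int m w (es s) / 2 ^ m).
    { unfold Pm, c, w. rewrite (cube_ext m (fun y => phi y - a y) (fun y => 1 * phi y + (-1) * a y)) by (intros; ring).
      rewrite (Cube_lin m m phi a 1 (-1) (es s) Gp Ga).
      assert (cube_int m phi (es 1) = cube_int m a (es s)).
      { rewrite (Cube_freeze m phi 0 ltac:(lia) (es 1)). rewrite es_0. fold a.
        apply cube_es. intros y t. unfold a. rewrite upd_upd. reflexivity. }
      rewrite H. field. apply pow_nonzero; lra. }
    assert (JB : 2 ^ m * B (es s) <= W s).
    { unfold B. rewrite Ew. pose proof (Cube_Jensen m m w (es s) Gw). pose proof (two_pow_pos m).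
      unfold W. replace (2 ^ m * (cube_int m w (es s) / 2 ^ m) ^ 2) with ((cube_int m w (es s)) ^ 2 / 2 ^ m) by (field; lra).
      apply Rmult_le_reg_r with (2 ^ m); [lra|].
      replace (cube_int m w (es s) ^ 2 / 2 ^ m * 2 ^ m) with (cube_int m w (es s) ^ 2) by (field; lra). lra. }
    unfold W in *. lra. }
  assert (cq2 : contR (qw (2 * d2))) by (apply qw_cont; lra).
  assert (cq1 : contR (qw (2 * d1))) by (apply qw_cont; lra).
  assert (I3 : RI (fun _ => Q) (1/2) 1 <= RI (fun s => 6 * W s + (4 * C) * J2 s) (1/2) 1).
  { apply RI_le; try lra. apply ex_RI; [lra| apply contR_const]. apply ex_RI_lin; apply ex_RI; auto; lra.
    intros; apply Step3. }
  rewrite RI_const in I3. rewrite RI_lin in I3 by (apply ex_RI; auto; lra).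
  assert (IW : RI W (1/2) 1 <= RI W 0 1).
  { rewrite <- (RI_Chasles W 0 (1/2) 1) by (apply ex_RI; auto; lra).
    assert (0 <= RI W 0 (1/2)) by (apply RI_ge0; [lra| apply ex_RI; auto; lra| intros; auto]). lra. }
  assert (IJ : RI J2 (1/2) 1 <= / kap * RI (fun s => qw (2 * d2) s * J2 s) 0 1).
  { assert (cqJ : contR (fun s => qw (2 * d2) s * J2 s)) by (apply contR_mult; auto).
    rewrite <- (RI_Chasles (fun s => qw (2 * d2) s * J2 s) 0 (1/2) 1) by (apply ex_RI; auto; lra).
    assert (0 <= RI (fun s => qw (2 * d2) s * J2 s) 0 (1/2)).
    { apply RI_ge0; [lra| apply ex_RI; auto; lra|]. intros; apply Rmult_le_pos; auto using qw_nonneg. }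
    assert (RI J2 (1/2) 1 <= RI (fun s => / kap * (qw (2 * d2) s * J2 s) + 0 * 0) (1/2) 1).
    { apply RI_le; try lra. apply ex_RI; auto; lra.
      apply ex_RI; [lra|]. apply contR_plus; [apply contR_mult; auto using contR_const| apply contR_const].
      intros s Hs. pose proof (qw_lower d2 s Hd2 Hs). fold kap in H0.
      rewrite Rmult_0_l, Rplus_0_r.
      apply Rmult_le_reg_l with kap; auto. rewrite <- Rmult_assoc, Rinv_r by lra.
      specialize (J20 s). nra. }
    rewrite (RI_lin (fun s => qw (2 * d2) s * J2 s) (fun _ => 0)) in H0 by (apply ex_RI; auto using contR_const; lra).
    rewrite RI_const in H0.
    assert (0 < / kap) by (apply Rinv_0_lt_compat; auto).
    nra. }
  assert (IZ : RI Z 0 1 <= RI (fun s => qw (2 * d1) s * J1 s) 0 1).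
  { apply RI_le; try lra. apply ex_RI; [lra|]. unfold Z. apply contR_mult; auto. apply contR_sq, contR_id.
    apply ex_RI; [lra|]. apply contR_mult; auto.
    intros s Hs. unfold Z. apply Rmult_le_compat_r; auto. apply qw_sq_le; auto. }
  assert (Fin : box_int m (fun x => (phi x - c) ^ 2) <= 2 * RI W 0 1 + 2 * Q).
  { rewrite box_RI by (apply Good_sq, Good_minus; auto using Good_const).
    assert (RI (fun s => cube_int m (fun x => (phi x - c) ^ 2) (es s)) 0 1 <=
            RI (fun s => 2 * W s + 2 * (fun _ => Q) s) 0 1).
    { apply RI_le; try lra. apply ex_RI; [lra|]. apply (contR_cube m). apply Good_sq, Good_minus; auto using Good_const.
      apply ex_RI_lin; apply ex_RI; auto using contR_const; lra.
      intros s Hs. rewrite (Qs s). unfold W.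
      rewrite <- (Cube_lin m) by auto. apply (Cube_mono m). apply Good_sq, Good_minus; auto using Good_const.
      apply Good_lin; auto. intro y. unfold w.
      pose proof (pow2_ge_0 (phi y - a y - (a y - c))). nra. }
    rewrite RI_lin in H by (apply ex_RI; auto using contR_const; lra). rewrite RI_const in H. lra. }
  assert (0 <= RI (fun s => qw (2 * d2) s * J2 s) 0 1).
  { apply RI_ge0; [lra| apply ex_RI; [lra| apply contR_mult; auto]|]. intros; apply Rmult_le_pos; auto using qw_nonneg. }
  assert (HC : 0 < C) by (unfold C; pose proof (two_pow_pos m); lra).
  unfold J1, J2, Sm in *. fold C kap.
  assert (X : 16 * C / kap * RI (fun s => qw (2 * d2) s * cube_int m (fun y => sum_1_to m (fun i => partial phi i y ^ 2)) (es s)) 0 1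
     = 16 * C * (/ kap * RI (fun s => qw (2 * d2) s * cube_int m (fun y => sum_1_to m (fun i => partial phi i y ^ 2)) (es s)) 0 1))
    by (field; lra).
  rewrite X. fold d0.
  nra.
Qed.

Theorem proposition3p6 (m : nat) (d1 d1' d2 d2' : R) :
  (1 <= m)%nat ->
  1 / 2 <= d1 < 1 ->
  0 <= d1' < 1 ->
  0 <= d2 -> 0 <= d2' ->
  exists lambda : R, lambda > 0 /\
    forall phi : (nat -> R) -> R, C1c m phi ->
      box_int m (Gamma m d1 d1' d2 d2' phi)
        >= lambda * box_int m (fun x => (phi x - avg m phi) ^ 2).
Proof.
  intros Hm Hd1 Hd1' Hd2 Hd2'.
  set (C := 32 * 2 ^ m).
  set (kap := exp (2 * d2 * ln (1 / 2))).
  assert (Hkap : 0 < kap) by apply exp_pos.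
  assert (HC : 0 < C) by (unfold C; pose proof (two_pow_pos m); lra).
  set (K := 104 + 16 * C / kap).
  assert (HK : 0 < K) by (unfold K; assert (0 < 16 * C / kap) by (apply Rdiv_lt_0_compat; lra); lra).
  exists (/ K). split; [apply Rinv_0_lt_compat; auto|].
  intros phi Hphi. destruct (phi_facts m phi Hphi) as [Gp [Gd UDd]].
  destruct (key_estimate m d1 d2 phi Hm Hd1 Hd2 Gp Gd UDd) as [c Hc].
  pose proof (variance m phi c Gp) as Hv.
  set (J1 := fun s => cube_int m (fun y => partial phi 0 y ^ 2) (es s)).
  set (J2 := fun s => cube_int m (fun y => sum_1_to m (fun i => partial phi i y ^ 2)) (es s)).
  assert (G1 : Good m (fun y => partial phi 0 y ^ 2)) by (apply Good_sq, Gd; lia).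
  assert (G2 : Good m (fun y => sum_1_to m (fun i => partial phi i y ^ 2))) by (apply Good_sum; intros; apply Gd; lia).
  assert (cq2 : contR (qw (2 * d2))) by (apply qw_cont; lra).
  assert (cq1 : contR (qw (2 * d1))) by (apply qw_cont; lra).
  assert (c1 : contR (fun s => qw (2 * d1) s * J1 s)) by (apply contR_mult; auto; apply (contR_cube m); auto).
  assert (c2 : contR (fun s => qw (2 * d2) s * J2 s)) by (apply contR_mult; auto; apply (contR_cube m); auto).
  assert (EG : box_int m (Gamma m d1 d1' d2 d2' phi) =
     1 * RI (fun s => qw (2 * d1) s * J1 s) 0 1 + 1 * RI (fun s => qw (2 * d2) s * J2 s) 0 1).
  { rewrite <- RI_lin by (apply ex_RI; auto; lra).
    unfold box_int. apply Rint_ext_RI; [lra| apply contR_plus; apply contR_mult; auto using contR_const|].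
    intros t Ht. unfold Gamma.
    rewrite (Cube_H2 m m (fun y => pow2 (Rabs (y 0%nat)) (2 * d1) (2 * d1')) (fun y => partial phi 0 y ^ 2)
       (fun y => pow2 (Rabs (y 0%nat)) (2 * d2) (2 * d2')) (fun y => sum_1_to m (fun i => partial phi i y ^ 2))).
    - change (upd (fun _ => 0) 0 t) with (es t). rewrite es_0.
      rewrite !pow2_qw by auto. unfold J1, J2. ring.
    - intros y i s Hi. rewrite upd_neq by lia. reflexivity.
    - intros y i s Hi. rewrite upd_neq by lia. reflexivity.
    - auto.
    - auto. }
  assert (X1 : 0 <= RI (fun s => qw (2 * d1) s * J1 s) 0 1).
  { apply RI_ge0; [lra| apply ex_RI; auto; lra|]. intros; apply Rmult_le_pos; [apply qw_nonneg|].
    apply (Cube_nonneg m); auto. intros; apply pow2_ge_0. }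
  assert (X2 : 0 <= RI (fun s => qw (2 * d2) s * J2 s) 0 1).
  { apply RI_ge0; [lra| apply ex_RI; auto; lra|]. intros; apply Rmult_le_pos; [apply qw_nonneg|].
    apply (Cube_nonneg m); auto. intros; apply sum_nonneg. }
  rewrite EG. unfold J1, J2 in *. fold C kap in Hc.
  set (Y1 := RI (fun s => qw (2 * d1) s * cube_int m (fun y => partial phi 0 y ^ 2) (es s)) 0 1) in *.
  set (Y2 := RI (fun s => qw (2 * d2) s * cube_int m (fun y => sum_1_to m (fun i => partial phi i y ^ 2)) (es s)) 0 1) in *.
  set (V := box_int m (fun x => (phi x - avg m phi) ^ 2)) in *.
  assert (HKV : V <= K * (Y1 + Y2)).
  { assert (0 < 16 * C / kap) by (apply Rdiv_lt_0_compat; lra).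
    unfold K. nra. }
  apply Rle_ge. apply Rmult_le_reg_l with K; auto.
  rewrite <- Rmult_assoc, Rinv_r by lra. lra.
Qed.
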